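(* Let $\omega$ be a weight on $\mathbb{Z}$ and let $f \in C(\Gamma)$ have $\omega$-absolutely convergent Fourier series. If $f(z) \neq 0$ for all $z \in \Gamma$, then there exists a weight $\nu$ on $\mathbb{Z}$ such that: (a) $1/f$ has $\nu$-absolutely convergent Fourier series; (b) $\nu$ is non-constant if and only if $\omega$ is non-constant; (c) $\nu(n) \le \omega(n)$ for all $n \in \mathbb{Z}$.
   Context: $\Gamma=\{z\in\mathbb{C}:|z|=1\}$ is the unit circle and $C(\Gamma)$ the set of continuous complex-valued functions on $\Gamma$. For $f\in C(\Gamma)$ its Fourier coefficients are $\widehat f(n)=\frac{1}{2\pi}\int_{-\pi}^{\pi} f(e^{it})e^{-int}\,dt$, $n\in\mathbb{Z}$. A weight on $\mathbb{Z}$ is a map $\omega:\mathbb{Z}\to[1,\infty)$ with $\omega(m+n)\le\omega(m)\omega(n)$ for all $m,n\in\mathbb{Z}$. A function $f\in C(\Gamma)$ has $\omega$-absolutely convergent Fourier series if $\sum_{n\in\mathbb{Z}}|\widehat f(n)|\,\omega(n)<\infty$. *)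

(* Defs.v *)
From Stdlib Require Import Reals ZArith.
From Coquelicot Require Import Coquelicot.
Open Scope R_scope.

Definition Gamma (z : C) : Prop := Cmod z = 1.

Definition eit (t : R) : C := (cos t, sin t).

(* f : C -> C restricted to Gamma is continuous on Gamma (values off Gamma
   are irrelevant), i.e. f|_Gamma belongs to C(Gamma). *)
Definition continuous_on_Gamma (f : C -> C) : Prop :=
  forall z, Gamma z -> filterlim f (within Gamma (locally z)) (locally (f z)).

Definition fourier_coeff (f : C -> C) (n : Z) : C :=
  scal (/ (2 * PI))
    (@RInt C_R_CompleteNormedModule
       (fun t => Cmult (f (eit t)) (eit (- (IZR n * t)))) (- PI) PI).

Definition is_weight (w : Z -> R) : Prop :=
  (forall n, 1 <= w n) /\ (forall m n, w (m + n)%Z <= w m * w n).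

Definition nonconstant (w : Z -> R) : Prop := exists m n, w m <> w n.

(* sum_{n in Z} |a n| w n < infinity (nonnegative terms, split into n >= 0
   and n < 0). *)
Definition Z_summable (u : Z -> R) : Prop :=
  ex_series (fun k : nat => u (Z.of_nat k)) /\
  ex_series (fun k : nat => u (- Z.of_nat (S k))%Z).

Definition w_abs_conv (w : Z -> R) (f : C -> C) : Prop :=
  Z_summable (fun n => Cmod (fourier_coeff f n) * w n).

(* Main.v *)
Require Import Defs.
From Stdlib Require Import Reals ZArith Lra Lia List Classical.
From Coquelicot Require Import Coquelicot.
Open Scope R_scope.

Lemma cont_C (g : R -> C) t : continuous (fun s => fst (g s)) t -> continuous (fun s => snd (g s)) t -> continuous g t.
Proof.
intros H1 H2.
apply continuous_ext with (f := fun s => (fst (g s), snd (g s))).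
intros s; destruct (g s); reflexivity.
apply (continuous_comp_2 (fun s => fst (g s)) (fun s => snd (g s)) (fun a b => (a,b) : C)); auto.
intros P HP. unfold filtermap. simpl in *. revert HP. apply filter_imp. intros [a b] Hp; exact Hp.
Qed.
Lemma cont_C_fst (g : R -> C) t : continuous g t -> continuous (fun s => fst (g s)) t.
Proof.
intros H. apply (continuous_comp g fst). exact H. destruct (g t) as [a b].
apply (continuous_fst a b).
Qed.
Lemma cont_C_snd (g : R -> C) t : continuous g t -> continuous (fun s => snd (g s)) t.
Proof.
intros H. apply (continuous_comp g snd). exact H. destruct (g t) as [a b].
apply (continuous_snd a b).
Qed.

Lemma cR_mult (f g : R -> R) t : continuous f t -> continuous g t -> continuous (fun s => f s * g s) t.
Proof. intros; apply (continuous_mult (K:=R_AbsRing)); auto. Qed.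
Lemma cR_plus (f g : R -> R) t : continuous f t -> continuous g t -> continuous (fun s => f s + g s) t.
Proof. intros; apply (continuous_plus (V:=R_NormedModule)); auto. Qed.
Lemma cR_opp (f : R -> R) t : continuous f t -> continuous (fun s => - f s) t.
Proof. intros; apply (continuous_opp (V:=R_NormedModule)); auto. Qed.
Lemma cR_minus (f g : R -> R) t : continuous f t -> continuous g t -> continuous (fun s => f s - g s) t.
Proof. intros; apply cR_plus; auto; apply cR_opp; auto. Qed.
Lemma cR_const (c : R) (t:R) : continuous (fun _ : R => c) t.
Proof. apply continuous_const. Qed.
Lemma cR_id t : continuous (fun s : R => s) t.
Proof. apply continuous_id. Qed.

Lemma cC_plus (g h : R -> C) t : continuous g t -> continuous h t -> continuous (fun s => (g s + h s)%C) t.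
Proof.
intros H1 H2; apply cont_C; simpl; apply cR_plus;
 first [apply cont_C_fst | apply cont_C_snd]; auto.
Qed.
Lemma cC_mult (g h : R -> C) t : continuous g t -> continuous h t -> continuous (fun s => (g s * h s)%C) t.
Proof.
intros H1 H2; apply cont_C; simpl; first [apply cR_minus | apply cR_plus]; apply cR_mult;
 first [apply cont_C_fst | apply cont_C_snd]; auto.
Qed.
Lemma cC_opp (g : R -> C) t : continuous g t -> continuous (fun s => (- g s)%C) t.
Proof.
intros H1; apply cont_C; simpl; apply cR_opp;
 first [apply cont_C_fst | apply cont_C_snd]; auto.
Qed.
Lemma cC_minus (g h : R -> C) t : continuous g t -> continuous h t -> continuous (fun s => (g s - h s)%C) t.
Proof. intros; apply cC_plus; auto; apply cC_opp; auto. Qed.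
Lemma cC_const (c : C) (t:R) : continuous (fun _ : R => c) t.
Proof. apply continuous_const. Qed.
Lemma cC_RtoC (f : R -> R) t : continuous f t -> continuous (fun s => RtoC (f s)) t.
Proof. intros H; apply cont_C; simpl; auto; apply cR_const. Qed.
Lemma cC_inv (g : R -> C) t : continuous g t -> g t <> 0%C -> continuous (fun s => Cinv (g s)) t.
Proof.
intros H Hn.
assert (Hd : fst (g t) ^ 2 + snd (g t) ^ 2 <> 0).
{ intro E. apply Hn. destruct (g t) as [a b]; simpl in *.
  assert (a = 0) by nra. assert (b = 0) by nra. subst; reflexivity. }
assert (Hc : continuous (fun s => fst (g s) ^ 2 + snd (g s) ^ 2) t).
{ simpl. apply cR_plus; apply cR_mult; try apply cR_mult; try apply cR_const;
  first [apply cont_C_fst | apply cont_C_snd]; auto. }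
apply cont_C; unfold Cinv; simpl fst; simpl snd.
- apply cR_mult. apply cont_C_fst; auto.
  apply continuous_Rinv_comp; auto.
- apply cR_mult. apply cR_opp. apply cont_C_snd; auto.
  apply continuous_Rinv_comp; auto.
Qed.
Lemma cC_pow (g : R -> C) t n : continuous g t -> continuous (fun s => (g s ^ n)%C) t.
Proof.
intros H; induction n; simpl. apply cC_const. apply cC_mult; auto.
Qed.

Lemma cC_eit (u : R -> R) t : continuous u t -> continuous (fun s => eit (u s)) t.
Proof.
intros H; apply cont_C; unfold eit; simpl.
apply continuous_cos_comp; auto.
apply continuous_sin_comp; auto.
Qed.

Lemma Ceq (x y : C) : fst x = fst y -> snd x = snd y -> x = y.
Proof. destruct x, y; simpl; intros; subst; auto. Qed.

Lemma eit_add a b : eit (a + b) = (eit a * eit b)%C.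
Proof. unfold eit; apply Ceq; simpl; [rewrite cos_plus | rewrite sin_plus]; ring. Qed.
Lemma eit_0 : eit 0 = 1%C.
Proof. unfold eit; rewrite cos_0, sin_0; reflexivity. Qed.
Lemma Cmod_eit t : Cmod (eit t) = 1.
Proof.
unfold eit, Cmod; simpl.
pose proof (sin2_cos2 t). unfold Rsqr in H.
replace (cos t * (cos t * 1) + sin t * (sin t * 1)) with 1 by lra. apply sqrt_1.
Qed.
Lemma eit_per t : eit (t + 2 * PI) = eit t.
Proof.
unfold eit. pose proof (cos_period t 1) as H1. pose proof (sin_period t 1) as H2.
simpl INR in *. replace (t + 2 * 1 * PI) with (t + 2 * PI) in * by ring. rewrite H1, H2; reflexivity.
Qed.
Lemma eit_neq0 t : eit t <> 0%C.
Proof. intro E. pose proof (Cmod_eit t). rewrite E, Cmod_0 in H. lra. Qed.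
Lemma eit_opp t : (eit (- t) * eit t)%C = 1%C.
Proof. rewrite <- eit_add. replace (-t + t) with 0 by ring. apply eit_0. Qed.

Definition ej (j : Z) (t : R) : C := eit (IZR j * t).
Definition cts (g : R -> C) := forall t, continuous g t.
Definition per (g : R -> C) := forall t, g (t + 2*PI) = g t.
Definition cf (g : R -> C) (n : Z) : C :=
  scal (/ (2 * PI))
    (@RInt C_R_CompleteNormedModule
       (fun t => Cmult (g t) (eit (- (IZR n * t)))) (- PI) PI).

Definition isC (g : R -> C) a b (l : C) := @is_RInt C_R_NormedModule g a b l.

Lemma isC_fst g a b l : isC g a b l -> is_RInt (fun t => fst (g t)) a b (fst l).
Proof. intros H. apply (is_RInt_fct_extend_fst (U:=R_NormedModule) (V:=R_NormedModule) g a b l H). Qed.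
Lemma isC_snd g a b l : isC g a b l -> is_RInt (fun t => snd (g t)) a b (snd l).
Proof. intros H. apply (is_RInt_fct_extend_snd (U:=R_NormedModule) (V:=R_NormedModule) g a b l H). Qed.
Lemma isC_pair g a b l : is_RInt (fun t => fst (g t)) a b (fst l) -> is_RInt (fun t => snd (g t)) a b (snd l) -> isC g a b l.
Proof.
intros H1 H2. destruct l as [l1 l2].
apply (is_RInt_fct_extend_pair (U:=R_NormedModule) (V:=R_NormedModule) g a b l1 l2 H1 H2).
Qed.

Definition isR (f : R -> R) a b (l : R) := @is_RInt R_NormedModule f a b l.

Lemma isR_lin f g a b If Ig p q : isR f a b If -> isR g a b Ig ->
  isR (fun t => p * f t + q * g t) a b (p * If + q * Ig).
Proof.
intros H1 H2.
apply (is_RInt_plus (V:=R_NormedModule) (fun t => p * f t) (fun t => q * g t)).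
apply (is_RInt_scal (V:=R_NormedModule) f a b p If H1).
apply (is_RInt_scal (V:=R_NormedModule) g a b q Ig H2).
Qed.

Lemma isR_ext f g a b l : (forall t, f t = g t) -> isR f a b l -> isR g a b l.
Proof. intros E H. apply (is_RInt_ext (V:=R_NormedModule) f); auto. Qed.
Lemma isC_ext f g a b l : (forall t, f t = g t) -> isC f a b l -> isC g a b l.
Proof. intros E H. apply (is_RInt_ext (V:=C_R_NormedModule) f); auto. Qed.
Lemma isR_eq f a b l l' : l = l' -> isR f a b l -> isR f a b l'.
Proof. intros; subst; auto. Qed.
Lemma isC_eq f a b l l' : l = l' -> isC f a b l -> isC f a b l'.
Proof. intros; subst; auto. Qed.

Lemma isC_Cmult_l g a b l c : isC g a b l -> isC (fun t => (c * g t)%C) a b (c * l)%C.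
Proof.
intros H. pose proof (isC_fst _ _ _ _ H) as H1. pose proof (isC_snd _ _ _ _ H) as H2.
destruct c as [p q]. apply isC_pair; simpl.
- eapply isR_eq; [|eapply isR_ext; [|apply (isR_lin _ _ _ _ _ _ p (-q) H1 H2)]].
  ring. intros; simpl; ring.
- eapply isR_eq; [|eapply isR_ext; [|apply (isR_lin _ _ _ _ _ _ p q H2 H1)]].
  ring. intros; simpl; ring.
Qed.

Lemma isC_plus f g a b If Ig : isC f a b If -> isC g a b Ig -> isC (fun t => (f t + g t)%C) a b (If + Ig)%C.
Proof. intros H1 H2. apply (is_RInt_plus (V:=C_R_NormedModule) f g a b If Ig H1 H2). Qed.
Lemma isC_opp f a b If : isC f a b If -> isC (fun t => (- f t)%C) a b (- If)%C.
Proof. intros H1. apply (is_RInt_opp (V:=C_R_NormedModule) f a b If H1). Qed.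
Lemma isC_minus f g a b If Ig : isC f a b If -> isC g a b Ig -> isC (fun t => (f t - g t)%C) a b (If - Ig)%C.
Proof. intros H1 H2. apply isC_plus; auto. apply isC_opp; auto. Qed.
Lemma isC_const (c : C) a b : isC (fun _ => c) a b (RtoC (b - a) * c)%C.
Proof.
pose proof (is_RInt_const (V:=C_R_NormedModule) a b c). rewrite scal_R_Cmult in H. exact H.
Qed.
Lemma isC_unique f a b l l' : isC f a b l -> isC f a b l' -> l = l'.
Proof.
intros H1 H2. rewrite <- (is_RInt_unique (V:=C_R_CompleteNormedModule) f a b l H1).
apply (is_RInt_unique (V:=C_R_CompleteNormedModule) f a b l' H2).
Qed.

Lemma cts_exC g a b : cts g -> exists l, isC g a b l.
Proof.
intros H. destruct (ex_RInt_continuous (V:=C_R_CompleteNormedModule) g a b) as [l Hl].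
intros; apply H. exists l; exact Hl.
Qed.

Lemma cf_isC g n I : isC (fun t => (g t * eit (- (IZR n * t)))%C) (-PI) PI I ->
  cf g n = (RtoC (/ (2 * PI)) * I)%C.
Proof.
intros H. unfold cf. rewrite (is_RInt_unique (V:=C_R_CompleteNormedModule) _ _ _ _ H).
apply scal_R_Cmult.
Qed.

Lemma cts_mul_e g n : cts g -> cts (fun t => (g t * eit (- (IZR n * t)))%C).
Proof.
intros H t. apply cC_mult; auto. apply cC_eit. apply cR_opp. apply cR_mult. apply cR_const. apply cR_id.
Qed.

Lemma cf_ex g n : cts g -> exists J, isC (fun t => (g t * eit (- (IZR n * t)))%C) (-PI) PI J /\
  cf g n = (RtoC (/ (2 * PI)) * J)%C.
Proof.
intros H. destruct (cts_exC _ (-PI) PI (cts_mul_e g n H)) as [I HI].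
exists I; split; auto. apply cf_isC; auto.
Qed.

Lemma cts_plus f g : cts f -> cts g -> cts (fun t => (f t + g t)%C).
Proof. intros H1 H2 t; apply cC_plus; auto. Qed.
Lemma cts_minus f g : cts f -> cts g -> cts (fun t => (f t - g t)%C).
Proof. intros H1 H2 t; apply cC_minus; auto. Qed.
Lemma cts_mult f g : cts f -> cts g -> cts (fun t => (f t * g t)%C).
Proof. intros H1 H2 t; apply cC_mult; auto. Qed.
Lemma cts_const c : cts (fun _ => c).
Proof. intros t; apply cC_const. Qed.
Lemma cts_scal c f : cts f -> cts (fun t => (c * f t)%C).
Proof. intros; apply cts_mult; auto; apply cts_const. Qed.
Lemma cts_ej j : cts (ej j).
Proof. intros t; unfold ej; apply cC_eit; apply cR_mult; [apply cR_const|apply cR_id]. Qed.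

Lemma cf_plus f g n : cts f -> cts g -> cf (fun t => (f t + g t)%C) n = (cf f n + cf g n)%C.
Proof.
intros H1 H2. destruct (cf_ex f n H1) as [I1 [HI1 E1]]. destruct (cf_ex g n H2) as [I2 [HI2 E2]].
rewrite E1, E2. rewrite (cf_isC _ _ (I1 + I2)). ring.
eapply isC_ext; [|apply isC_plus; [exact HI1 | exact HI2]]. intros; simpl; ring.
Qed.
Lemma cf_scal c f n : cts f -> cf (fun t => (c * f t)%C) n = (c * cf f n)%C.
Proof.
intros H1. destruct (cf_ex f n H1) as [I1 [HI1 E1]].
rewrite E1. rewrite (cf_isC _ _ (c * I1)). ring.
eapply isC_ext; [|apply isC_Cmult_l; exact HI1]. intros; simpl; ring.
Qed.
Lemma cf_ext f g n : (forall t, f t = g t) -> cf f n = cf g n.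
Proof.
intros E. unfold cf. f_equal. apply RInt_ext. intros; rewrite E; reflexivity.
Qed.
Lemma cf_opp f n : cts f -> cf (fun t => (- f t)%C) n = (- cf f n)%C.
Proof.
intros H. rewrite (cf_ext _ (fun t => (-1) * f t)%C). rewrite cf_scal; auto. ring.
intros; ring.
Qed.
Lemma cf_minus f g n : cts f -> cts g -> cf (fun t => (f t - g t)%C) n = (cf f n - cf g n)%C.
Proof.
intros H1 H2. unfold Cminus. rewrite cf_plus; auto. rewrite cf_opp; auto.
intros t; apply cC_opp; auto.
Qed.

Lemma norm_C (x : C) : @norm R_AbsRing C_R_NormedModule x = Cmod x.
Proof. rewrite Cmod_norm. reflexivity. Qed.

Lemma isC_bound g a b l M : a <= b -> isC g a b l -> (forall t, a <= t <= b -> Cmod (g t) <= M) ->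
  Cmod l <= (b - a) * M.
Proof.
intros Hab H HM. rewrite <- norm_C.
apply (norm_RInt_le (V:=C_R_NormedModule) g (fun _ => M) a b l ((b-a)*M) Hab).
intros; rewrite norm_C; auto. exact H.
pose proof (is_RInt_const (V:=R_NormedModule) a b M). exact H0.
Qed.

Lemma Cmod_RtoC_mult (r : R) (z : C) : Cmod (RtoC r * z) = Rabs r * Cmod z.
Proof. rewrite Cmod_mult, Cmod_R. reflexivity. Qed.

Lemma cf_bound g n M : cts g -> (forall t, -PI <= t <= PI -> Cmod (g t) <= M) -> Cmod (cf g n) <= M.
Proof.
intros Hc HM. destruct (cf_ex g n Hc) as [J [HJ E]]. rewrite E, Cmod_RtoC_mult.
pose proof PI_RGT_0.
assert (Cmod J <= (PI - - PI) * M).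
{ apply (isC_bound _ (-PI) PI _ _ ltac:(lra) HJ). intros t Ht. rewrite Cmod_mult, Cmod_eit.
  rewrite Rmult_1_r; auto. }
rewrite Rabs_right. 2: { apply Rle_ge, Rlt_le, Rinv_0_lt_compat; lra. }
replace M with (/ (2 * PI) * ((PI - - PI) * M)) by (field; lra).
apply Rmult_le_compat_l; auto. left; apply Rinv_0_lt_compat; lra.
Qed.

Lemma sin_kPI k : sin (IZR k * PI) = 0.
Proof. apply sin_eq_0_1. exists k; reflexivity. Qed.

Lemma is_int_eit (k : Z) : isC (fun t => eit (IZR k * t)) (-PI) PI (if Z.eq_dec k 0 then RtoC (2 * PI) else 0%C).
Proof.
destruct (Z.eq_dec k 0) as [->|Hk].
- eapply isC_ext; [|eapply isC_eq; [|apply (isC_const 1%C)]].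
  intros t; simpl. rewrite Rmult_0_l, eit_0. reflexivity.
  apply Ceq; simpl; ring.
- assert (Hk' : IZR k <> 0) by (apply not_0_IZR; auto).
  apply isC_pair; simpl.
  + eapply isR_eq; [|apply (is_RInt_derive (V:=R_CompleteNormedModule) (fun t => sin (IZR k * t) / IZR k))].
    * simpl. unfold minus, plus, opp; simpl. replace (IZR k * - PI) with (- (IZR k * PI)) by ring.
      rewrite sin_neg, sin_kPI. field; auto.
    * intros x _. auto_derive; auto. field; auto.
    * intros x _. apply continuous_cos_comp. apply cR_mult; [apply cR_const|apply cR_id].
  + eapply isR_eq; [|apply (is_RInt_derive (V:=R_CompleteNormedModule) (fun t => - cos (IZR k * t) / IZR k))].
    * simpl. unfold minus, plus, opp; simpl. replace (IZR k * - PI) with (- (IZR k * PI)) by ring.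
      rewrite cos_neg. field; auto.
    * intros x _. auto_derive; auto. field; auto.
    * intros x _. apply continuous_sin_comp. apply cR_mult; [apply cR_const|apply cR_id].
Qed.

Lemma cf_ej j n : cf (ej j) n = if Z.eq_dec j n then 1%C else 0%C.
Proof.
rewrite (cf_isC _ _ (if Z.eq_dec (j - n) 0 then RtoC (2 * PI) else 0%C)).
- destruct (Z.eq_dec (j - n) 0), (Z.eq_dec j n); try lia.
  + apply Ceq; simpl; pose proof PI_RGT_0; field; lra.
  + apply Ceq; simpl; ring.
- eapply isC_ext; [|apply is_int_eit]. intros t. unfold ej. rewrite <- eit_add. f_equal.
  rewrite minus_IZR. ring.
Qed.

Notation RI := (@RInt C_R_CompleteNormedModule).

Lemma exRI g a b : cts g -> @ex_RInt C_R_NormedModule g a b.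
Proof. intros H. apply (ex_RInt_continuous (V:=C_R_CompleteNormedModule)). intros; apply H. Qed.

Lemma isC_RI g a b : cts g -> isC g a b (RI g a b).
Proof. intros H. apply (RInt_correct (V:=C_R_CompleteNormedModule)). apply exRI; auto. Qed.

Lemma RI_ext (f g : R -> C) a b : (forall t, f t = g t) -> RI f a b = RI g a b.
Proof. intros E; apply RInt_ext; intros; auto. Qed.

Lemma scal1C (z : C) : @scal R_AbsRing C_R_NormedModule 1 z = z.
Proof. rewrite scal_R_Cmult. apply Ceq; simpl; ring. Qed.

Lemma shift_RI g x : cts g -> per g -> RI (fun t => g (t + x)) (-PI) PI = RI g (-PI) PI.
Proof.
intros Hc Hp.
assert (E1 : RI (fun t => g (t + x)) (-PI) PI = RI g (1 * -PI + x) (1 * PI + x)).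
{ rewrite <- (RInt_comp_lin (V:=C_R_CompleteNormedModule) g 1 x (-PI) PI (exRI g _ _ Hc)).
  apply RI_ext. intros t. rewrite scal1C. f_equal; ring. }
rewrite E1. replace (1 * - PI + x) with (-PI + x) by ring. replace (1 * PI + x) with (PI + x) by ring.
assert (E2 : RI g PI (PI + x) = RI g (-PI) (-PI + x)).
{ replace PI with (1 * - PI + 2 * PI) at 1 by ring.
  replace (PI + x) with (1 * (- PI + x) + 2 * PI) by ring.
  rewrite <- (RInt_comp_lin (V:=C_R_CompleteNormedModule) g 1 (2*PI) (-PI) (-PI+x)).
  2:{ apply exRI; auto. }
  apply RI_ext. intros t. rewrite scal1C. replace (1 * t + 2 * PI) with (t + 2 * PI) by ring.
  rewrite Hp. reflexivity. }
rewrite <- (RInt_Chasles (V:=C_R_CompleteNormedModule) g (-PI + x) (-PI) (PI + x)); try apply exRI; auto.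
rewrite <- (RInt_Chasles (V:=C_R_CompleteNormedModule) g (-PI) PI (PI + x)); try apply exRI; auto.
rewrite E2.
rewrite plus_comm. rewrite <- plus_assoc.
rewrite (RInt_Chasles (V:=C_R_CompleteNormedModule) g (-PI) (-PI+x) (-PI)); try apply exRI; auto.
rewrite RInt_point. apply plus_zero_r.
Qed.

Lemma eit_2PIk (k : Z) t : eit (t + IZR k * (2 * PI)) = eit t.
Proof.
revert t. induction k using Z.peano_ind; intros t.
- rewrite Rmult_0_l, Rplus_0_r; auto.
- rewrite succ_IZR. replace (t + (IZR k + 1) * (2 * PI)) with ((t + 2 * PI) + IZR k * (2 * PI)) by ring.
  rewrite IHk. apply eit_per.
- rewrite <- Z.sub_1_r, minus_IZR. replace (t + (IZR k - 1) * (2 * PI)) with ((t - 2 * PI) + IZR k * (2 * PI)) by ring.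
  rewrite IHk. rewrite <- (eit_per (t - 2 * PI)). f_equal; ring.
Qed.

Lemma per_ej j : per (ej j).
Proof. intros t; unfold ej. replace (IZR j * (t + 2 * PI)) with (IZR j * t + IZR j * (2 * PI)) by ring. apply eit_2PIk. Qed.
Lemma per_plus f g : per f -> per g -> per (fun t => (f t + g t)%C).
Proof. intros H1 H2 t; rewrite H1, H2; auto. Qed.
Lemma per_minus f g : per f -> per g -> per (fun t => (f t - g t)%C).
Proof. intros H1 H2 t; rewrite H1, H2; auto. Qed.
Lemma per_mult f g : per f -> per g -> per (fun t => (f t * g t)%C).
Proof. intros H1 H2 t; rewrite H1, H2; auto. Qed.
Lemma per_const c : per (fun _ => c).
Proof. intros t; auto. Qed.
Lemma per_scal c f : per f -> per (fun t => (c * f t)%C).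
Proof. intros H t; rewrite H; auto. Qed.

Lemma cf_shift g x n : cts g -> per g -> cf (fun t => g (t + x)) n = (eit (IZR n * x) * cf g n)%C.
Proof.
intros Hc Hp.
set (H := fun s => (g s * eit (- (IZR n * (s - x))))%C).
assert (HcH : cts H).
{ intros t; unfold H; apply cC_mult; auto. apply cC_eit. apply cR_opp, cR_mult; [apply cR_const|].
  apply cR_minus; [apply cR_id | apply cR_const]. }
assert (HpH : per H).
{ intros t; unfold H. rewrite Hp. f_equal.
  replace (- (IZR n * (t + 2 * PI - x))) with (- (IZR n * (t - x)) + IZR (- n) * (2 * PI))
   by (rewrite opp_IZR; ring). apply eit_2PIk. }
unfold cf.
transitivity (scal (/ (2 * PI)) (RI (fun t => H (t + x)) (-PI) PI)).
{ f_equal. apply RI_ext. intros t; unfold H. f_equal. f_equal. f_equal. ring. }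
rewrite shift_RI; auto.
rewrite !scal_R_Cmult.
assert (E : RI H (-PI) PI = (eit (IZR n * x) * RI (fun t => (g t * eit (- (IZR n * t)))%C) (-PI) PI)%C).
{ apply (isC_unique H (-PI) PI). apply isC_RI; auto.
  eapply isC_ext; [|apply isC_Cmult_l; apply isC_RI; apply cts_mul_e; auto].
  intros t; unfold H. replace (- (IZR n * (t - x))) with (IZR n * x + - (IZR n * t)) by ring.
  rewrite eit_add. ring. }
rewrite E. ring.
Qed.

Fixpoint sumL {A} (f : A -> R) (l : list A) : R :=
  match l with nil => 0 | x :: l' => f x + sumL f l' end.
Fixpoint sumC {A} (f : A -> C) (l : list A) : C :=
  match l with nil => 0%C | x :: l' => (f x + sumC f l')%C end.

Lemma sumL_le {A} (f g : A -> R) l : (forall x, In x l -> f x <= g x) -> sumL f l <= sumL g l.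
Proof. induction l; simpl; intros H. lra. pose proof (H a (or_introl eq_refl)).
  assert (sumL f l <= sumL g l) by (apply IHl; auto). lra. Qed.
Lemma sumL_nonneg {A} (f : A -> R) l : (forall x, 0 <= f x) -> 0 <= sumL f l.
Proof. induction l; simpl; intros H. lra. pose proof (H a). pose proof (IHl H). lra. Qed.
Lemma sumL_plus {A} (f g : A -> R) l : sumL (fun x => f x + g x) l = sumL f l + sumL g l.
Proof. induction l; simpl; lra. Qed.
Lemma sumL_scal {A} (f : A -> R) c l : sumL (fun x => c * f x) l = c * sumL f l.
Proof. induction l; simpl. ring. rewrite IHl; ring. Qed.
Lemma sumL_ext {A} (f g : A -> R) l : (forall x, f x = g x) -> sumL f l = sumL g l.
Proof. induction l; simpl; intros H; auto. rewrite H, IHl; auto. Qed.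
Lemma sumL_app {A} (f : A -> R) l1 l2 : sumL f (l1 ++ l2) = sumL f l1 + sumL f l2.
Proof. induction l1; simpl. ring. rewrite IHl1; ring. Qed.
Lemma sumL_comm {A B} (f : A -> B -> R) l1 l2 :
  sumL (fun x => sumL (fun y => f x y) l2) l1 = sumL (fun y => sumL (fun x => f x y) l1) l2.
Proof.
induction l1; simpl. induction l2; simpl; auto; rewrite <- IHl2; ring.
rewrite IHl1. rewrite <- sumL_plus. reflexivity.
Qed.
Lemma sumL_map {A B} (f : B -> R) (g : A -> B) l : sumL f (map g l) = sumL (fun x => f (g x)) l.
Proof. induction l; simpl; auto. rewrite IHl; auto. Qed.

Lemma sumC_plus {A} (f g : A -> C) l : sumC (fun x => f x + g x)%C l = (sumC f l + sumC g l)%C.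
Proof. induction l; simpl. apply Ceq; simpl; ring. rewrite IHl; ring. Qed.
Lemma sumC_scal {A} (f : A -> C) c l : sumC (fun x => c * f x)%C l = (c * sumC f l)%C.
Proof. induction l; simpl. apply Ceq; simpl; ring. rewrite IHl; ring. Qed.
Lemma sumC_ext {A} (f g : A -> C) l : (forall x, f x = g x) -> sumC f l = sumC g l.
Proof. induction l; simpl; intros H; auto. rewrite H, IHl; auto. Qed.
Lemma Cmod_sumC {A} (f : A -> C) l : Cmod (sumC f l) <= sumL (fun x => Cmod (f x)) l.
Proof.
induction l; simpl. rewrite Cmod_0; lra.
eapply Rle_trans; [apply Cmod_triangle|]. lra.
Qed.
Lemma sumC_map {A B} (f : B -> C) (g : A -> B) l : sumC f (map g l) = sumC (fun x => f (g x)) l.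
Proof. induction l; simpl; auto. rewrite IHl; auto. Qed.
Lemma sumC_app {A} (f : A -> C) l1 l2 : sumC f (l1 ++ l2) = (sumC f l1 + sumC f l2)%C.
Proof. induction l1; simpl. apply Ceq; simpl; ring. rewrite IHl1; ring. Qed.

Lemma sumL_incl {A} (f : A -> R) (L M : list A) : NoDup L -> incl L M -> (forall x, 0 <= f x) ->
  sumL f L <= sumL f M.
Proof.
revert M. induction L as [|a L IH]; intros M HN HI Hf; simpl.
- apply sumL_nonneg; auto.
- inversion HN; subst.
  assert (Ha : In a M) by (apply HI; left; auto).
  destruct (in_split _ _ Ha) as [M1 [M2 ->]].
  rewrite sumL_app. simpl.
  assert (sumL f L <= sumL f (M1 ++ M2)).
  { apply IH; auto. intros y Hy. assert (In y (M1 ++ a :: M2)) by (apply HI; right; auto).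
    apply in_app_or in H. apply in_or_app. destruct H as [H|[H|H]]; auto. subst; contradiction. }
  rewrite sumL_app in H. lra.
Qed.

Fixpoint W (K : nat) : list Z :=
  match K with 0 => 0%Z :: nil | S K' => Z.of_nat (S K') :: (- Z.of_nat (S K'))%Z :: W K' end.

Lemma In_W K n : In n (W K) <-> (Z.abs n <= Z.of_nat K)%Z.
Proof.
induction K; simpl.
- split. intros [H|[]]; subst; simpl; lia. intros; left; lia.
- rewrite IHK. split. intros [H|[H|H]]; lia.
  intros H. destruct (Z.eq_dec n (Z.pos (Pos.of_succ_nat K))); auto.
  destruct (Z.eq_dec n (Z.neg (Pos.of_succ_nat K))); auto. right; right; lia.
Qed.
Lemma W_NoDup K : NoDup (W K).
Proof.
induction K; simpl. constructor; auto. constructor.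
constructor. intros [H|H]. lia. apply In_W in H. lia.
constructor. intros H. apply In_W in H. lia. auto.
Qed.
Lemma exists_W (L : list Z) : exists K, incl L (W K).
Proof.
induction L as [|a L [K HK]]. exists 0%nat. intros x [].
exists (Nat.max K (Z.abs_nat a)). intros x [Hx|Hx].
- subst. apply In_W. lia.
- apply In_W. apply HK in Hx. apply In_W in Hx. lia.
Qed.
Lemma W_mono K K' : (K <= K')%nat -> incl (W K) (W K').
Proof. intros H x Hx. apply In_W in Hx. apply In_W. lia. Qed.

Lemma NoDup_shift (L : list Z) j : NoDup L -> NoDup (map (fun n => (n - j)%Z) L).
Proof.
induction 1; simpl; constructor; auto.
intros Hin. apply in_map_iff in Hin. destruct Hin as [y [E Hy]].
assert (y = x) by lia. subst; contradiction.
Qed.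

Definition TL := list (C * Z).
Definition evT (T : TL) (t : R) : C := sumC (fun p => (fst p * ej (snd p) t)%C) T.
Definition nT (T : TL) : R := sumL (fun p => Cmod (fst p)) T.

Lemma cts_sumC {A} (F : A -> R -> C) l : (forall x, cts (F x)) -> cts (fun t => sumC (fun x => F x t) l).
Proof.
intros H. induction l; simpl. apply cts_const. apply cts_plus; auto.
Qed.
Lemma per_sumC {A} (F : A -> R -> C) l : (forall x, per (F x)) -> per (fun t => sumC (fun x => F x t) l).
Proof.
intros H. induction l; simpl. apply per_const. apply per_plus; auto.
Qed.
Lemma cts_evT T : cts (evT T).
Proof. unfold evT. apply (cts_sumC (fun p t => (fst p * ej (snd p) t)%C)). intros; apply cts_scal, cts_ej. Qed.
Lemma per_evT T : per (evT T).
Proof. unfold evT. apply (per_sumC (fun p t => (fst p * ej (snd p) t)%C)). intros; apply per_scal, per_ej. Qed.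

Lemma cf_zero n : cf (fun _ => 0%C) n = 0%C.
Proof.
rewrite (cf_ext _ (fun t => 0 * ej 0 t)%C). rewrite cf_scal. apply Ceq; simpl; ring. apply cts_ej.
intros; apply Ceq; simpl; ring.
Qed.

Lemma cf_sumC {A} (F : A -> R -> C) l n : (forall x, cts (F x)) ->
  cf (fun t => sumC (fun x => F x t) l) n = sumC (fun x => cf (F x) n) l.
Proof.
intros H. induction l; simpl. apply cf_zero.
rewrite cf_plus; auto. rewrite IHl; auto. apply (cts_sumC F l H).
Qed.

Lemma cf_ej_mul j v n : cts v -> cf (fun t => (ej j t * v t)%C) n = cf v (n - j).
Proof.
intros H. unfold cf. f_equal. apply RI_ext. intros t. unfold ej.
rewrite minus_IZR. replace (- ((IZR n - IZR j) * t)) with (IZR j * t + - (IZR n * t)) by ring.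
rewrite eit_add. ring.
Qed.

Lemma cf_evT_mul T v n : cts v ->
  cf (fun t => (evT T t * v t)%C) n = sumC (fun p => (fst p * cf v (n - snd p))%C) T.
Proof.
intros H. unfold evT.
rewrite (cf_ext _ (fun t => sumC (fun p => fst p * (ej (snd p) t * v t)) T)%C).
2:{ intros t. induction T; simpl. apply Ceq; simpl; ring. rewrite <- IHT. ring. }
rewrite (cf_sumC (fun p t => (fst p * (ej (snd p) t * v t))%C)).
2:{ intros; apply cts_scal, cts_mult; auto; apply cts_ej. }
apply sumC_ext. intros p. rewrite cf_scal. rewrite cf_ej_mul; auto.
apply cts_mult; auto; apply cts_ej.
Qed.

Definition Abound (g : R -> C) (M : R) := forall L, NoDup L -> sumL (fun n => Cmod (cf g n)) L <= M.

Lemma Abound_evT_mul T v Mv : cts v -> Abound v Mv -> Abound (fun t => (evT T t * v t)%C) (nT T * Mv).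
Proof.
intros Hc HA L HL.
eapply Rle_trans.
{ apply sumL_le. intros n _. rewrite cf_evT_mul; auto. apply Cmod_sumC. }
rewrite sumL_comm. unfold nT. rewrite Rmult_comm, <- sumL_scal.
apply sumL_le. intros p _.
rewrite (sumL_ext _ (fun n => Cmod (fst p) * Cmod (cf v (n - snd p)))).
2:{ intros; apply Cmod_mult. }
rewrite sumL_scal. rewrite Rmult_comm. apply Rmult_le_compat_r. apply Cmod_ge_0.
pose proof (HA _ (NoDup_shift L (snd p) HL)). rewrite sumL_map in H. exact H.
Qed.

Definition Tmul (T1 T2 : TL) : TL :=
  flat_map (fun p : C * Z => map (fun q : C * Z => (Cmult (fst p) (fst q), Z.add (snd p) (snd q))) T2) T1.

Lemma evT_mul T1 T2 t : evT (Tmul T1 T2) t = (evT T1 t * evT T2 t)%C.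
Proof.
unfold evT, Tmul. induction T1; simpl. apply Ceq; simpl; ring.
rewrite sumC_app, IHT1. rewrite sumC_map. simpl.
rewrite (sumC_ext _ (fun q => (fst a * ej (snd a) t) * (fst q * ej (snd q) t))%C).
rewrite sumC_scal. ring.
intros q. unfold ej. rewrite plus_IZR. replace ((IZR (snd a) + IZR (snd q)) * t) with (IZR (snd a) * t + IZR (snd q) * t) by ring.
rewrite eit_add. ring.
Qed.

Lemma Rabs_le_inv a b : Rabs a <= b -> - b <= a <= b.
Proof. unfold Rabs; destruct (Rcase_abs a); intros; lra. Qed.

Lemma cont_eps (G : R -> R) x : continuous G x -> forall eps, 0 < eps ->
  exists d, 0 < d /\ forall y, Rabs (y - x) < d -> Rabs (G y - G x) < eps.
Proof.
intros Hc eps He. apply continuity_pt_filterlim in Hc.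
destruct (Hc eps He) as [d [Hd H]]. exists d; split; auto.
intros y Hy. destruct (Req_dec y x) as [->|Hne].
- rewrite Rminus_diag, Rabs_R0; auto.
- apply H. split. unfold D_x, no_cond; auto. exact Hy.
Qed.

Lemma cont_bound (G : R -> R) a b : a <= b -> (forall s, continuous G s) ->
  exists M, forall s, a <= s <= b -> Rabs (G s) <= M.
Proof.
intros Hab Hc. destruct (continuity_ab_maj (fun s => Rabs (G s)) a b Hab) as [x [Hx _]].
intros c _. apply continuity_pt_filterlim. apply continuous_Rabs_comp. apply Hc.
exists (Rabs (G x)); auto.
Qed.

Lemma pow_le_compat x y m : 0 <= x <= y -> x ^ m <= y ^ m.
Proof. intros [H1 H2]. apply pow_incr; auto. Qed.

Lemma isR_unique f a b l l' : isR f a b l -> isR f a b l' -> l = l'.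
Proof.
intros H1 H2. rewrite <- (is_RInt_unique (V:=R_CompleteNormedModule) f a b l H1).
apply (is_RInt_unique (V:=R_CompleteNormedModule) f a b l' H2).
Qed.

Lemma isR_cont f a b : (forall s, continuous f s) -> exists l, isR f a b l.
Proof.
intros H. destruct (ex_RInt_continuous (V:=R_CompleteNormedModule) f a b) as [l Hl].
intros; apply H. exists l; exact Hl.
Qed.

Lemma isR_const c a b : isR (fun _ => c) a b ((b - a) * c).
Proof. apply (is_RInt_const (V:=R_NormedModule)). Qed.

Lemma isR_lower f a b l c : a <= b -> isR f a b l -> (forall s, a <= s <= b -> c <= f s) -> (b - a) * c <= l.
Proof.
intros Hab H Hf. apply (is_RInt_le (fun _ => c) f a b _ l Hab (isR_const c a b) H).
intros s Hs; apply Hf; lra.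
Qed.

Lemma isR_chasles f a b c l1 l2 : isR f a b l1 -> isR f b c l2 -> isR f a c (l1 + l2).
Proof. intros H1 H2. apply (is_RInt_Chasles (V:=R_NormedModule) f a b c l1 l2 H1 H2). Qed.

Lemma kernel_pos (G : R -> R) : (forall s, continuous G s) -> 0 < G 0 ->
  exists m, forall I, isR (fun s => (1 + cos s) ^ m * G s) (-PI) PI I -> 0 < I.
Proof.
intros Hc HG. pose proof PI_RGT_0 as HPI. pose proof PI2_3_2 as HP3.
destruct (cont_eps G 0 (Hc 0) (G 0 / 2) ltac:(lra)) as [d [Hd Hdd]].
set (eta := Rmin d 1 / 2).
assert (Heta : 0 < eta /\ eta < d /\ eta <= 1/2).
{ unfold eta. pose proof (Rmin_l d 1). pose proof (Rmin_r d 1).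
  assert (0 < Rmin d 1) by (apply Rmin_glb_lt; lra). lra. }
assert (HGe : forall s, Rabs s <= eta -> G 0 / 2 <= G s).
{ intros s Hs. assert (Rabs (s - 0) < d) by (rewrite Rminus_0_r; lra).
  apply Hdd in H. apply Rabs_def2 in H. lra. }
destruct (cont_bound G (-PI) PI ltac:(lra) Hc) as [M HM].
assert (HM0 : 0 <= M) by (pose proof (HM 0 ltac:(lra)); pose proof (Rabs_pos (G 0)); lra).
set (p := 1 + cos (eta / 2)). set (q := 1 + cos eta).
assert (Hq : 1 <= q). { unfold q. pose proof (cos_ge_0 eta ltac:(lra) ltac:(lra)). lra. }
assert (Hpq : q < p). { unfold p, q. pose proof (cos_decreasing_1 (eta/2) eta ltac:(lra) ltac:(lra) ltac:(lra) ltac:(lra) ltac:(lra)). lra. }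
assert (Hr : Rabs (q / p) < 1).
{ rewrite Rabs_right. apply Rmult_lt_reg_r with p. lra. unfold Rdiv; rewrite Rmult_assoc, Rinv_l; lra.
  apply Rle_ge. apply Rlt_le, Rdiv_lt_0_compat; lra. }
destruct (pow_lt_1_zero (q / p) Hr (eta * (G 0 / 2) / (2 * PI * (M + 1)))) as [m Hm].
{ apply Rdiv_lt_0_compat. nra. nra. }
exists m. intros I HI.
specialize (Hm m (Nat.le_refl _)). rewrite Rabs_right in Hm.
2:{ apply Rle_ge, pow_le. apply Rlt_le, Rdiv_lt_0_compat; lra. }
unfold Rdiv in Hm. rewrite Rpow_mult_distr, pow_inv in Hm. fold (Rdiv (q ^ m) (p ^ m)) in Hm.
assert (Hpm : 0 < p ^ m) by (apply pow_lt; lra).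
assert (Hqm : 0 < q ^ m) by (apply pow_lt; lra).
assert (Hcomp : 2 * PI * (M + 1) * q ^ m < eta * (G 0 / 2) * p ^ m).
{ apply Rmult_lt_compat_r with (r := p ^ m) in Hm; auto.
  unfold Rdiv in Hm. rewrite Rmult_assoc, Rinv_l in Hm by lra. rewrite Rmult_1_r in Hm.
  apply Rmult_lt_compat_l with (r := 2 * PI * (M + 1)) in Hm; [|nra].
  replace (2 * PI * (M + 1) * (eta * (G 0 * / 2) * / (2 * PI * (M + 1)) * p ^ m))
    with (eta * (G 0 / 2) * p ^ m) in Hm by (field; repeat split; lra). lra. }
set (F := fun s => (1 + cos s) ^ m * G s).
assert (HcK : forall k s, continuous (fun s => (1 + cos s) ^ k) s).
{ intros k s0; induction k; simpl. apply cR_const. apply cR_mult; auto.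
  apply cR_plus; [apply cR_const|apply continuous_cos]. }
assert (HcF : forall s, continuous F s).
{ intros s; unfold F. apply cR_mult; auto. }
destruct (isR_cont F (-PI) (-(eta/2)) HcF) as [I1 H1].
destruct (isR_cont F (-(eta/2)) (eta/2) HcF) as [I2 H2].
destruct (isR_cont F (eta/2) PI HcF) as [I3 H3].
assert (E : I = I1 + I2 + I3).
{ apply (isR_unique F (-PI) PI). exact HI. apply isR_chasles with (eta/2); auto.
  apply isR_chasles with (-(eta/2)); auto. }
assert (Hcos : forall s, -PI <= s <= PI -> cos s = cos (Rabs s)).
{ intros s _. unfold Rabs; destruct (Rcase_abs s); auto. rewrite cos_neg; auto. }
assert (Hout : forall s, -PI <= s <= PI -> - (M * q ^ m) <= F s).
{ intros s Hs. unfold F.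
  assert (Hk : 0 <= 1 + cos s) by (pose proof (COS_bound s); lra).
  destruct (Rle_lt_dec (Rabs s) eta).
  - pose proof (HGe s r). assert (0 <= (1 + cos s) ^ m) by (apply pow_le; auto).
    assert (0 <= M * q ^ m) by nra. nra.
  - assert (1 + cos s <= q).
    { unfold q. rewrite Hcos by auto. assert (Rabs s <= PI) by (apply Rabs_le; lra).
      pose proof (cos_decr_1 eta (Rabs s) ltac:(lra) ltac:(lra) ltac:(pose proof (Rabs_pos s); lra) H ltac:(lra)). lra. }
    assert ((1 + cos s) ^ m <= q ^ m) by (apply pow_le_compat; lra).
    assert (0 <= (1 + cos s) ^ m) by (apply pow_le; auto).
    pose proof (Rabs_le_inv _ _ (HM s Hs)) as HH. nra. }
assert (L1 : (-(eta/2) - -PI) * (- (M * q ^ m)) <= I1).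
{ apply (isR_lower F); auto. lra. intros s Hs; apply Hout; lra. }
assert (L3 : (PI - eta/2) * (- (M * q ^ m)) <= I3).
{ apply (isR_lower F); auto. lra. intros s Hs; apply Hout; lra. }
assert (L2 : (eta/2 - -(eta/2)) * (p ^ m * (G 0 / 2)) <= I2).
{ apply (isR_lower F); auto. lra. intros s Hs. unfold F.
  assert (Hs' : Rabs s <= eta / 2) by (apply Rabs_le; lra).
  apply Rmult_le_compat. apply pow_le; unfold p; pose proof (COS_bound (eta/2)); lra. lra.
  apply pow_le_compat. split. unfold p; pose proof (COS_bound (eta/2)); lra. unfold p. rewrite (Hcos s) by lra.
  pose proof (cos_decr_1 (Rabs s) (eta/2) ltac:(pose proof (Rabs_pos s); lra) ltac:(lra) ltac:(lra) ltac:(lra) Hs'). lra.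
  apply HGe. lra. }
assert (0 <= M * q ^ m) by nra.
rewrite E. nra.
Qed.

Definition T1 : TL := (RtoC 1, 0%Z) :: (RtoC (/2), 1%Z) :: (RtoC (/2), (-1)%Z) :: nil.
Fixpoint Tk (m : nat) : TL := match m with 0 => (RtoC 1, 0%Z) :: nil | S m' => Tmul (Tk m') T1 end.

Lemma evT_T1 s : evT T1 s = RtoC (1 + cos s).
Proof.
unfold evT, T1, ej; simpl. rewrite Rmult_0_l, eit_0. unfold eit.
replace (-1 * s) with (- s) by ring. rewrite Rmult_1_l, cos_neg, sin_neg.
apply Ceq; simpl; field.
Qed.
Lemma evT_Tk m s : evT (Tk m) s = RtoC ((1 + cos s) ^ m).
Proof.
induction m; simpl.
- unfold evT, ej; simpl. rewrite Rmult_0_l, eit_0. apply Ceq; simpl; ring.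
- rewrite evT_mul, IHm, evT_T1. apply Ceq; simpl; ring.
Qed.

Lemma cts_shift g x : cts g -> cts (fun s => g (s + x)).
Proof.
intros H s. apply (continuous_comp (fun s => s + x) g). apply cR_plus; [apply cR_id|apply cR_const].
apply H.
Qed.
Lemma per_shift g x : per g -> per (fun s => g (s + x)).
Proof. intros H s. replace (s + 2 * PI + x) with ((s + x) + 2 * PI) by ring. apply H. Qed.

Theorem uniq g : cts g -> per g -> (forall n, cf g n = 0%C) -> forall x, g x = 0%C.
Proof.
intros Hc Hp H0 x.
destruct (Req_dec (Cmod (g x)) 0) as [E|Hne]. apply Cmod_eq_0; auto. exfalso.
set (v := fun s : R => Cmult (Cconj (g x)) (g (s + x))).
assert (Hcv : cts v) by (apply cts_scal, cts_shift; auto).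
assert (Hv0 : forall n, cf v n = 0%C).
{ intros n. unfold v. rewrite cf_scal by (apply cts_shift; auto). rewrite cf_shift, H0 by auto.
  apply Ceq; simpl; ring. }
set (G := fun s => fst (v s)).
assert (HcG : forall s, continuous G s) by (intros s; apply cont_C_fst, Hcv).
assert (HG0 : 0 < G 0).
{ unfold G, v. rewrite Rplus_0_l. destruct (g x) as [a b]. simpl.
  assert (a <> 0 \/ b <> 0).
  { destruct (Req_dec a 0), (Req_dec b 0); auto. subst. exfalso. apply Hne. exact Cmod_0. }
  destruct H; nra. }
destruct (kernel_pos G HcG HG0) as [m Hm].
destruct (cf_ex (fun s => (evT (Tk m) s * v s)%C) 0 (cts_mult _ _ (cts_evT _) Hcv)) as [J [HJ EJ]].
assert (HJ0 : J = 0%C).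
{ rewrite cf_evT_mul in EJ by auto.
  rewrite (sumC_ext _ (fun _ => 0%C)) in EJ.
  2:{ intros p. rewrite Hv0. apply Ceq; simpl; ring. }
  assert (E0 : sumC (fun _ : C * Z => 0%C) (Tk m) = 0%C).
  { generalize (Tk m). intros l; induction l; simpl; auto. rewrite IHl. apply Ceq; simpl; ring. }
  rewrite E0 in EJ. pose proof PI_RGT_0.
  replace J with (RtoC (2 * PI) * (RtoC (/ (2 * PI)) * J))%C. rewrite <- EJ. apply Ceq; simpl; ring.
  apply Ceq; simpl; field; lra. }
subst J. apply isC_fst in HJ.
assert (HH : isR (fun s => (1 + cos s) ^ m * G s) (-PI) PI 0).
{ apply (fun E => isR_ext _ _ _ _ _ E HJ). intros s. rewrite evT_Tk. rewrite Rmult_0_l, Ropp_0, eit_0.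
  unfold G; simpl; ring. }
apply Hm in HH. lra.
Qed.

Definition SN (u : R -> C) (N : nat) : TL := map (fun j => (cf u j, j)) (W N).
Definition sN (u : R -> C) (N : nat) : R := sumL (fun j => Cmod (cf u j)) (W N).

Lemma nT_SN u N : nT (SN u N) = sN u N.
Proof. unfold nT, SN, sN. rewrite sumL_map. reflexivity. Qed.
Lemma sN_le u M N : Abound u M -> sN u N <= M.
Proof. intros H. apply H, W_NoDup. Qed.
Lemma sN_incr u N : sN u N <= sN u (S N).
Proof.
unfold sN. simpl W at 2. simpl sumL. pose proof (Cmod_ge_0 (cf u (Z.pos (Pos.of_succ_nat N)))).
pose proof (Cmod_ge_0 (cf u (Z.neg (Pos.of_succ_nat N)))). lra.
Qed.

Lemma W_split N K : (N <= K)%nat -> exists D, W K = D ++ W N.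
Proof.
intros H. induction H. exists nil; auto.
destruct IHle as [D HD]. exists (Z.of_nat (S m) :: (- Z.of_nat (S m))%Z :: D). simpl. rewrite HD. reflexivity.
Qed.
Lemma NoDup_app_disj {A} (l l' : list A) : NoDup (l ++ l') -> forall n, In n l -> ~ In n l'.
Proof.
induction l; simpl; intros H n Hn; [destruct Hn|]. inversion H; subst.
destruct Hn as [->|Hn]. intros Hin. apply H2. apply in_or_app; auto.
apply IHl; auto.
Qed.

Lemma Cmod_le_sum (z : C) : Cmod z <= Rabs (fst z) + Rabs (snd z).
Proof.
unfold Cmod. rewrite <- (sqrt_Rsqr (Rabs (fst z) + Rabs (snd z))).
2:{ pose proof (Rabs_pos (fst z)); pose proof (Rabs_pos (snd z)); lra. }
apply sqrt_le_1_alt. unfold Rsqr. simpl.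
pose proof (Rabs_pos (fst z)); pose proof (Rabs_pos (snd z)).
pose proof (Rsqr_abs (fst z)); pose proof (Rsqr_abs (snd z)). unfold Rsqr in *. nra.
Qed.
Lemma Rabs_fst_le (z : C) : Rabs (fst z) <= Cmod z.
Proof. pose proof (Rmax_Cmod z). pose proof (Rmax_l (Rabs (fst z)) (Rabs (snd z))). lra. Qed.
Lemma Rabs_snd_le (z : C) : Rabs (snd z) <= Cmod z.
Proof. pose proof (Rmax_Cmod z). pose proof (Rmax_r (Rabs (fst z)) (Rabs (snd z))). lra. Qed.

Lemma Cmod_ej j t : Cmod (ej j t) = 1.
Proof. apply Cmod_eit. Qed.
Lemma evT_bound T t : Cmod (evT T t) <= nT T.
Proof.
unfold evT, nT. eapply Rle_trans; [apply Cmod_sumC|]. apply sumL_le. intros p _.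
rewrite Cmod_mult, Cmod_ej. lra.
Qed.
Lemma evT_app T1 T2 t : evT (T1 ++ T2) t = (evT T1 t + evT T2 t)%C.
Proof. unfold evT. apply sumC_app. Qed.

Lemma tail u M : Abound u M -> forall eps, 0 < eps -> exists N0, forall L, NoDup L ->
  (forall n, In n L -> ~ In n (W N0)) -> sumL (fun n => Cmod (cf u n)) L <= eps.
Proof.
intros HA eps He.
destruct (ex_finite_lim_seq_incr (sN u) M (sN_incr u) (fun N => sN_le u M N HA)) as [l Hl].
pose proof (is_lim_seq_incr_compare _ _ Hl (sN_incr u)) as Hle.
apply is_lim_seq_spec in Hl. destruct (Hl (mkposreal eps He)) as [N0 HN0].
exists N0. intros L HL Hdisj.
specialize (HN0 N0 (Nat.le_refl _)). simpl in HN0.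
destruct (exists_W (L ++ W N0)) as [K HK].
assert (HND : NoDup (L ++ W N0)).
{ apply NoDup_app; auto. apply W_NoDup. }
pose proof (sumL_incl (fun n => Cmod (cf u n)) _ _ HND HK (fun n => Cmod_ge_0 _)).
rewrite sumL_app in H. fold (sN u N0) in H. fold (sN u K) in H.
pose proof (Hle K). apply Rabs_def2 in HN0. lra.
Qed.

Lemma SN_cauchy u M : Abound u M -> forall eps, 0 < eps -> exists N0, forall N K, (N0 <= N)%nat -> (N <= K)%nat ->
  forall t, Cmod (evT (SN u K) t - evT (SN u N) t) <= eps.
Proof.
intros HA eps He. destruct (tail u M HA eps He) as [N0 H0]. exists N0.
intros N K HN HK t. destruct (W_split N K HK) as [D HD].
unfold SN. rewrite HD, map_app, evT_app.
replace (evT (map (fun j : Z => (cf u j, j)) D) t + evT (map (fun j : Z => (cf u j, j)) (W N)) t -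
   evT (map (fun j : Z => (cf u j, j)) (W N)) t)%C with (evT (map (fun j : Z => (cf u j, j)) D) t)
  by (apply Ceq; simpl; ring).
eapply Rle_trans; [apply evT_bound|]. unfold nT. rewrite sumL_map. simpl.
assert (HND : NoDup (D ++ W N)) by (rewrite <- HD; apply W_NoDup).
apply H0. apply (NoDup_app_remove_r _ _ HND).
intros n Hn Hin. apply (NoDup_app_disj _ _ HND n Hn). apply (W_mono N0 N HN). auto.
Qed.

Lemma fst_Cminus (a b : C) : fst (a - b)%C = fst a - fst b.
Proof. simpl; ring. Qed.
Lemma snd_Cminus (a b : C) : snd (a - b)%C = snd a - snd b.
Proof. simpl; ring. Qed.


Lemma lim_bound (c : nat -> R) eps N0 : ex_finite_lim_seq c ->
  (forall N K, (N0 <= N)%nat -> (N <= K)%nat -> Rabs (c K - c N) <= eps) ->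
  forall N, (N0 <= N)%nat -> Rabs (real (Lim_seq c) - c N) <= eps.
Proof.
intros Hex H N HN. pose proof (Lim_seq_correct' c Hex) as Hl.
apply is_lim_seq_spec in Hl.
apply le_epsilon. intros d Hd. destruct (Hl (mkposreal d Hd)) as [K0 HK0].
specialize (HK0 (Nat.max N K0) (Nat.le_max_r _ _)). simpl in HK0.
specialize (H N (Nat.max N K0) HN (Nat.le_max_l _ _)).
replace (real (Lim_seq c) - c N) with ((c (Nat.max N K0) - c N) - (c (Nat.max N K0) - real (Lim_seq c))) by ring.
eapply Rle_trans; [apply Rabs_triang|]. rewrite Rabs_Ropp. lra.
Qed.

Lemma cauchy_ex (c : nat -> R) : (forall eps, 0 < eps -> exists N0, forall N K, (N0 <= N)%nat -> (N <= K)%nat -> Rabs (c K - c N) <= eps) ->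
  ex_finite_lim_seq c.
Proof.
intros H. apply ex_lim_seq_cauchy_corr. intros e.
destruct (H (e/2)) as [N0 HN0]. destruct e; simpl; lra.
exists N0. intros n m Hn Hm. destruct (Nat.le_ge_cases n m).
- pose proof (HN0 n m Hn H0). rewrite Rabs_minus_sym. destruct e; simpl in *; lra.
- pose proof (HN0 m n Hm H0). destruct e; simpl in *; lra.
Qed.

Definition wr u t := real (Lim_seq (fun K => fst (evT (SN u K) t))).
Definition wi u t := real (Lim_seq (fun K => snd (evT (SN u K) t))).
Definition w u t : C := (wr u t, wi u t).

Lemma w_approx u M : Abound u M -> forall eps, 0 < eps -> exists N0, forall N, (N0 <= N)%nat ->
  forall t, Rabs (wr u t - fst (evT (SN u N) t)) <= eps /\ Rabs (wi u t - snd (evT (SN u N) t)) <= eps.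
Proof.
intros HA eps He. destruct (SN_cauchy u M HA eps He) as [N0 H0].
assert (Hc : forall t, ex_finite_lim_seq (fun K => fst (evT (SN u K) t)) /\ ex_finite_lim_seq (fun K => snd (evT (SN u K) t))).
{ intros t; split; apply cauchy_ex; intros e He'; destruct (SN_cauchy u M HA e He') as [N1 H1];
  exists N1; intros N K HN HK; specialize (H1 N K HN HK t).
  - eapply Rle_trans; [|exact H1]. eapply Rle_trans; [|apply Rabs_fst_le]. rewrite fst_Cminus; lra.
  - eapply Rle_trans; [|exact H1]. eapply Rle_trans; [|apply Rabs_snd_le]. rewrite snd_Cminus; lra. }
exists N0. intros N HN t. split.
- apply (lim_bound _ eps N0 (proj1 (Hc t))); auto. intros N' K HN' HK.
  eapply Rle_trans; [|apply (H0 N' K HN' HK t)]. eapply Rle_trans; [|apply Rabs_fst_le]. rewrite fst_Cminus; lra.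
- apply (lim_bound _ eps N0 (proj2 (Hc t))); auto. intros N' K HN' HK.
  eapply Rle_trans; [|apply (H0 N' K HN' HK t)]. eapply Rle_trans; [|apply Rabs_snd_le]. rewrite snd_Cminus; lra.
Qed.

Lemma w_approxC u M : Abound u M -> forall eps, 0 < eps -> exists N0, forall N, (N0 <= N)%nat ->
  forall t, Cmod (w u t - evT (SN u N) t) <= eps.
Proof.
intros HA eps He. destruct (w_approx u M HA (eps/2) ltac:(lra)) as [N0 H0]. exists N0.
intros N HN t. destruct (H0 N HN t). eapply Rle_trans; [apply Cmod_le_sum|].
rewrite fst_Cminus, snd_Cminus. unfold w; simpl fst; simpl snd. lra.
Qed.

Lemma eps_cont (f : R -> R) x : (forall eps, 0 < eps -> exists d, 0 < d /\ forall y, Rabs (y - x) < d -> Rabs (f y - f x) <= eps) ->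
  continuous f x.
Proof.
intros H. apply continuity_pt_filterlim. intros eps He.
destruct (H (eps/2) ltac:(lra)) as [d [Hd Hy]]. exists d; split; auto.
intros y [_ Hyd]. apply Rle_lt_trans with (eps/2). apply Hy. exact Hyd. lra.
Qed.

Lemma cts_w u M : Abound u M -> cts (w u).
Proof.
intros HA t. apply cont_C; simpl.
- apply eps_cont. intros eps He. destruct (w_approx u M HA (eps/3) ltac:(lra)) as [N H0].
  destruct (cont_eps _ t (cont_C_fst _ t (cts_evT (SN u N) t)) (eps/3) ltac:(lra)) as [d [Hd Hdd]].
  exists d; split; auto. intros y Hy. specialize (Hdd y Hy).
  destruct (H0 N (Nat.le_refl _) y) as [A1 _]. destruct (H0 N (Nat.le_refl _) t) as [A2 _].
  unfold wr in *.
  replace (real (Lim_seq (fun K : nat => fst (evT (SN u K) y))) - real (Lim_seq (fun K : nat => fst (evT (SN u K) t))))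
   with ((real (Lim_seq (fun K : nat => fst (evT (SN u K) y))) - fst (evT (SN u N) y)) + (fst (evT (SN u N) y) - fst (evT (SN u N) t)) - (real (Lim_seq (fun K : nat => fst (evT (SN u K) t))) - fst (evT (SN u N) t))) by ring.
  eapply Rle_trans; [apply Rabs_triang|]. rewrite Rabs_Ropp. eapply Rle_trans; [apply Rplus_le_compat_r; apply Rabs_triang|]. lra.
- apply eps_cont. intros eps He. destruct (w_approx u M HA (eps/3) ltac:(lra)) as [N H0].
  destruct (cont_eps _ t (cont_C_snd _ t (cts_evT (SN u N) t)) (eps/3) ltac:(lra)) as [d [Hd Hdd]].
  exists d; split; auto. intros y Hy. specialize (Hdd y Hy).
  destruct (H0 N (Nat.le_refl _) y) as [_ A1]. destruct (H0 N (Nat.le_refl _) t) as [_ A2].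
  unfold wi in *.
  replace (real (Lim_seq (fun K : nat => snd (evT (SN u K) y))) - real (Lim_seq (fun K : nat => snd (evT (SN u K) t))))
   with ((real (Lim_seq (fun K : nat => snd (evT (SN u K) y))) - snd (evT (SN u N) y)) + (snd (evT (SN u N) y) - snd (evT (SN u N) t)) - (real (Lim_seq (fun K : nat => snd (evT (SN u K) t))) - snd (evT (SN u N) t))) by ring.
  eapply Rle_trans; [apply Rabs_triang|]. rewrite Rabs_Ropp. eapply Rle_trans; [apply Rplus_le_compat_r; apply Rabs_triang|]. lra.
Qed.

Lemma per_w u : per (w u).
Proof.
intros t. unfold w, wr, wi. f_equal; f_equal; apply Lim_seq_ext; intros K; rewrite per_evT; auto.
Qed.

Lemma cf_one k : cf (fun _ => 1%C) k = if Z.eq_dec 0 k then 1%C else 0%C.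
Proof.
rewrite <- cf_ej. apply cf_ext. intros t. unfold ej. rewrite Rmult_0_l, eit_0. reflexivity.
Qed.

Lemma cf_evT T n : cf (evT T) n = sumC (fun p => if Z.eq_dec (snd p) n then fst p else 0%C) T.
Proof.
rewrite (cf_ext _ (fun t => (evT T t * 1)%C)) by (intros; ring).
rewrite cf_evT_mul by apply cts_const. apply sumC_ext. intros p.
rewrite cf_one. destruct (Z.eq_dec 0 (n - snd p)), (Z.eq_dec (snd p) n); try lia; apply Ceq; simpl; ring.
Qed.

Lemma sumC_delta_out (f : Z -> C) l n : ~ In n l ->
  sumC (fun j => if Z.eq_dec j n then f j else 0%C) l = 0%C.
Proof.
induction l; simpl; intros H; auto.
destruct (Z.eq_dec a n). subst; tauto. rewrite IHl by tauto. apply Ceq; simpl; ring.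
Qed.
Lemma sumC_delta_in (f : Z -> C) l n : NoDup l -> In n l ->
  sumC (fun j => if Z.eq_dec j n then f j else 0%C) l = f n.
Proof.
induction 1; simpl; intros H1; [destruct H1|].
destruct (Z.eq_dec x n).
- subst. rewrite sumC_delta_out by auto. apply Ceq; simpl; ring.
- destruct H1 as [H1|H1]. subst; tauto. rewrite IHNoDup by auto. apply Ceq; simpl; ring.
Qed.

Lemma cf_SN_in u N n : In n (W N) -> cf (evT (SN u N)) n = cf u n.
Proof.
intros H. rewrite cf_evT. unfold SN. rewrite sumC_map. simpl.
apply (sumC_delta_in (fun j => cf u j)); auto. apply W_NoDup.
Qed.
Lemma cf_SN_out u N n : ~ In n (W N) -> cf (evT (SN u N)) n = 0%C.
Proof.
intros H. rewrite cf_evT. unfold SN. rewrite sumC_map. simpl.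
apply (sumC_delta_out (fun j => cf u j)); auto.
Qed.

Lemma Cminus_eq0 (a b : C) : (a - b)%C = 0%C -> a = b.
Proof.
intros E. apply Ceq; [pose proof (f_equal fst E) as H|pose proof (f_equal snd E) as H];
 [rewrite fst_Cminus in H|rewrite snd_Cminus in H]; simpl in H; lra.
Qed.

Lemma cf_w u M : cts u -> Abound u M -> forall n, cf (w u) n = cf u n.
Proof.
intros Hc HA n. pose proof (cts_w u M HA) as Hw.
destruct (Req_dec (Cmod (cf (w u) n - cf u n)) 0) as [E|E].
{ apply Cmod_eq_0 in E. apply Cminus_eq0; auto. }
exfalso. set (e := Cmod (cf (w u) n - cf u n)).
assert (He : 0 < e) by (pose proof (Cmod_ge_0 (cf (w u) n - cf u n)); unfold e in *; lra).
destruct (w_approxC u M HA (e/2) ltac:(lra)) as [N0 H0].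
set (N := Nat.max N0 (Z.abs_nat n)).
assert (HIn : In n (W N)) by (apply In_W; unfold N; lia).
assert (Hb : Cmod (cf (fun t => w u t - evT (SN u N) t)%C n) <= e/2).
{ apply cf_bound. apply cts_minus; auto. apply cts_evT. intros t _. apply H0. unfold N; lia. }
rewrite cf_minus, cf_SN_in in Hb; auto. fold e in Hb. lra. apply cts_evT.
Qed.

Theorem repr u M : cts u -> per u -> Abound u M -> forall eps, 0 < eps -> exists N0, forall N, (N0 <= N)%nat ->
  forall t, Cmod (u t - evT (SN u N) t) <= eps.
Proof.
intros Hc Hp HA eps He. destruct (w_approxC u M HA eps He) as [N0 H0]. exists N0. intros N HN t.
assert (E : u t = w u t).
{ assert (Z0 : (u t - w u t)%C = 0%C).
  { apply (uniq (fun t => u t - w u t)%C).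
    apply cts_minus; auto. apply (cts_w u M HA). apply per_minus; auto. apply per_w.
    intros n. rewrite cf_minus; auto. rewrite (cf_w u M Hc HA n). apply Ceq; simpl; ring. apply (cts_w u M HA). }
  apply Cminus_eq0; auto. }
rewrite E. apply H0; auto.
Qed.

Lemma sumL_if_out (f : Z -> R) (P : Z -> Prop) (Pd : forall n, {P n} + {~ P n}) L :
  sumL (fun n => if Pd n then 0 else f n) L = sumL f (filter (fun n => if Pd n then false else true) L).
Proof.
induction L; simpl; auto. destruct (Pd a); simpl; rewrite IHL; ring.
Qed.

Lemma Abound_tail u M : cts u -> Abound u M -> forall eps, 0 < eps -> exists N0, forall N, (N0 <= N)%nat ->
  Abound (fun t => u t - evT (SN u N) t)%C eps.
Proof.
intros Hc HA eps He. destruct (tail u M HA eps He) as [N0 H0]. exists N0. intros N HN L HL.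
rewrite (sumL_ext _ (fun n => if in_dec Z.eq_dec n (W N) then 0 else Cmod (cf u n))).
2:{ intros n. rewrite cf_minus; auto. 2: apply cts_evT. destruct (in_dec Z.eq_dec n (W N)).
    rewrite cf_SN_in; auto. unfold Cminus; rewrite Cplus_opp_r. apply Cmod_0.
    rewrite cf_SN_out; auto. f_equal. apply Ceq; simpl; ring. }
rewrite (sumL_if_out _ (fun n => In n (W N))).
apply H0. apply NoDup_filter; auto.
intros n Hn Hin. apply filter_In in Hn. destruct Hn as [_ Hn].
destruct (in_dec Z.eq_dec n (W N)). discriminate. apply n0. apply (W_mono N0 N HN); auto.
Qed.

Lemma sumL_const {A} (c : R) (l : list A) : sumL (fun _ => c) l = INR (length l) * c.
Proof. induction l; simpl length; [simpl; ring|]. simpl sumL. rewrite IHl, S_INR. ring. Qed.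

Lemma Abound_nonneg g M : Abound g M -> 0 <= M.
Proof. intros H. apply (H nil). constructor. Qed.

Lemma cts_bound (v : R -> C) : cts v -> exists S, 0 <= S /\ forall t, -PI <= t <= PI -> Cmod (v t) <= S.
Proof.
intros Hc. pose proof PI_RGT_0.
destruct (cont_bound (fun s => fst (v s)) (-PI) PI ltac:(lra) (fun s => cont_C_fst v s (Hc s))) as [B1 H1].
destruct (cont_bound (fun s => snd (v s)) (-PI) PI ltac:(lra) (fun s => cont_C_snd v s (Hc s))) as [B2 H2].
exists (B1 + B2). split.
- pose proof (H1 0 ltac:(lra)). pose proof (H2 0 ltac:(lra)). pose proof (Rabs_pos (fst (v 0))). pose proof (Rabs_pos (snd (v 0))). lra.
- intros t Ht. eapply Rle_trans; [apply Cmod_le_sum|]. pose proof (H1 t Ht); pose proof (H2 t Ht); lra.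
Qed.

Theorem Abound_mul u v Mu Mv : cts u -> per u -> Abound u Mu -> cts v -> Abound v Mv ->
  Abound (fun t => (u t * v t)%C) (Mu * Mv).
Proof.
intros Hcu Hpu HAu Hcv HAv L HL.
pose proof (Abound_nonneg v Mv HAv) as HMv.
destruct (cts_bound v Hcv) as [Sv [HSv HSvb]].
apply le_epsilon. intros d Hd.
set (len := INR (length L)). assert (Hlen : 0 <= len) by apply pos_INR.
set (e := d / ((len + 1) * (Sv + 1))).
assert (He : 0 < e) by (apply Rdiv_lt_0_compat; nra).
destruct (repr u Mu Hcu Hpu HAu e He) as [N HN]. specialize (HN N (Nat.le_refl _)).
set (T := SN u N).
assert (Hsplit : forall n, Cmod (cf (fun t => (u t * v t)%C) n) <= e * Sv + Cmod (cf (fun t => (evT T t * v t)%C) n)).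
{ intros n. rewrite (cf_ext _ (fun t => ((u t - evT T t) * v t + evT T t * v t)%C)) by (intros; ring).
  rewrite cf_plus. eapply Rle_trans; [apply Cmod_triangle|]. apply Rplus_le_compat_r.
  apply cf_bound. apply cts_mult; auto. apply cts_minus; auto. apply cts_evT.
  intros t Ht. rewrite Cmod_mult. apply Rmult_le_compat; try apply Cmod_ge_0. apply HN. auto.
  apply cts_mult; auto. apply cts_minus; auto. apply cts_evT. apply cts_mult; auto. apply cts_evT. }
eapply Rle_trans; [apply sumL_le; intros n _; apply Hsplit|].
rewrite sumL_plus, sumL_const. fold len.
pose proof (Abound_evT_mul T v Mv Hcv HAv L HL) as H2.
assert (nT T <= Mu) by (unfold T; rewrite nT_SN; apply sN_le; auto).
assert (len * (e * Sv) <= d).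
{ unfold e. apply Rle_trans with (len * (d / ((len + 1) * (Sv + 1)) * (Sv + 1))).
  apply Rmult_le_compat_l; auto. apply Rmult_le_compat_l. left; apply Rdiv_lt_0_compat; nra. lra.
  replace (len * (d / ((len + 1) * (Sv + 1)) * (Sv + 1))) with (d * (len / (len + 1))) by (field; lra).
  rewrite <- (Rmult_1_r d) at 2. apply Rmult_le_compat_l; [lra|].
  apply Rmult_le_reg_r with (len + 1); [lra|]. unfold Rdiv; rewrite Rmult_assoc, Rinv_l; lra. }
assert (nT T * Mv <= Mu * Mv) by (apply Rmult_le_compat_r; auto).
lra.
Qed.

Lemma Abound_plus f g M1 M2 : cts f -> cts g -> Abound f M1 -> Abound g M2 -> Abound (fun t => (f t + g t)%C) (M1 + M2).
Proof.
intros Hf Hg H1 H2 L HL. eapply Rle_trans.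
apply sumL_le. intros n _. rewrite cf_plus; auto. apply Cmod_triangle.
rewrite sumL_plus. pose proof (H1 L HL); pose proof (H2 L HL); lra.
Qed.
Lemma Abound_zero : Abound (fun _ => 0%C) 0.
Proof.
intros L HL. rewrite (sumL_ext _ (fun _ => 0)). rewrite sumL_const; lra.
intros n. rewrite cf_zero. apply Cmod_0.
Qed.
Lemma Abound_le g M M' : M <= M' -> Abound g M -> Abound g M'.
Proof. intros H HA L HL. pose proof (HA L HL); lra. Qed.

Lemma Abound_sumC {A} (F : A -> R -> C) (b : A -> R) l : (forall x, cts (F x)) -> (forall x, Abound (F x) (b x)) ->
  Abound (fun t => sumC (fun x => F x t) l) (sumL b l).
Proof.
intros Hc HA. induction l; simpl. apply Abound_zero.
apply Abound_plus; auto. apply (cts_sumC F l Hc).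
Qed.

Theorem Abound_series (h : nat -> R -> C) (g : R -> C) (b : nat -> R) B :
  (forall k, cts (h k)) -> cts g -> (forall k, Abound (h k) (b k)) -> (forall K, sumL b (seq 0 K) <= B) ->
  (forall eps, 0 < eps -> exists K, forall t, -PI <= t <= PI -> Cmod (g t - sumC (fun k => h k t) (seq 0 K)) <= eps) ->
  Abound g B.
Proof.
intros Hch Hcg HA HB Hconv L HL. apply le_epsilon. intros d Hd.
set (len := INR (length L)). assert (Hlen : 0 <= len) by apply pos_INR.
destruct (Hconv (d / (len + 1))) as [K HK]. apply Rdiv_lt_0_compat; lra.
set (Hs := fun t => sumC (fun k => h k t) (seq 0 K)).
assert (HcHs : cts Hs) by (apply (cts_sumC h); auto).
assert (HAs : Abound Hs (sumL b (seq 0 K))) by (apply (Abound_sumC h); auto).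
eapply Rle_trans.
{ apply sumL_le. intros n _.
  rewrite (cf_ext g (fun t => (g t - Hs t) + Hs t)%C) by (intros; ring).
  rewrite cf_plus; [| apply cts_minus; auto | auto].
  eapply Rle_trans; [apply Cmod_triangle|]. apply Rplus_le_compat_r.
  apply (cf_bound _ n (d / (len + 1))). apply cts_minus; auto. intros t Ht. apply HK; auto. }
rewrite sumL_plus, sumL_const. fold len.
pose proof (HAs L HL). pose proof (HB K).
assert (len * (d / (len + 1)) <= d).
{ replace (len * (d / (len + 1))) with (d * (len / (len + 1))) by (field; lra).
  rewrite <- (Rmult_1_r d) at 2. apply Rmult_le_compat_l; [lra|].
  apply Rmult_le_reg_r with (len + 1); [lra|]. unfold Rdiv; rewrite Rmult_assoc, Rinv_l; lra. }
lra.
Qed.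

Lemma eit_PI : eit PI = (-1)%C.
Proof. unfold eit. rewrite cos_PI, sin_PI. apply Ceq; simpl; ring. Qed.
Lemma eit_mPI : eit (-PI) = (-1)%C.
Proof. unfold eit. rewrite cos_neg, sin_neg, cos_PI, sin_PI. apply Ceq; simpl; ring. Qed.

Lemma nh_PI (n : Z) : n <> 0%Z -> IZR n * (PI / Rabs (IZR n)) = PI \/ IZR n * (PI / Rabs (IZR n)) = - PI.
Proof.
intros Hn. assert (IZR n <> 0) by (apply not_0_IZR; auto).
unfold Rabs; destruct (Rcase_abs (IZR n)); [right|left]; field; lra.
Qed.

Lemma cts_ext (f g : R -> C) : (forall t, f t = g t) -> cts f -> cts g.
Proof. intros E H t. apply (continuous_ext f); auto. Qed.

Definition D2 (g : R -> C) (t h : R) : C := Cplus (Cminus (g (t + h)) (Cmult (RtoC 2) (g t))) (g (t - h)).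

Lemma cf_D2 g h n : cts g -> per g ->
  cf (fun t => D2 g t h) n =
  ((eit (IZR n * h) - RtoC 2 + eit (IZR n * - h)) * cf g n)%C.
Proof.
intros Hc Hp.
assert (Hc1 : cts (fun t => g (t + h))) by (apply cts_shift; auto).
assert (Hc2 : cts (fun t => g (t + - h))) by (apply cts_shift; auto).
rewrite (cf_ext _ (fun t => Cplus (Cminus (g (t + h)) (Cmult (RtoC 2) (g t))) (g (t + - h)))) by (intros; unfold D2, Rminus; reflexivity).
rewrite cf_plus; auto. rewrite cf_minus; auto. rewrite cf_scal; auto.
rewrite !cf_shift; auto. ring.
apply cts_scal; auto. apply cts_minus; auto. apply cts_scal; auto.
Qed.

Lemma coef_bound g K n : cts g -> per g -> 0 <= K ->
  (forall t h, 0 < h -> Cmod (D2 g t h) <= K * h ^ 2) ->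
  n <> 0%Z -> Cmod (cf g n) <= K * PI ^ 2 / (4 * IZR n ^ 2).
Proof.
intros Hc Hp HK HD Hn. pose proof PI_RGT_0.
assert (Hn' : IZR n <> 0) by (apply not_0_IZR; auto).
assert (Han : 0 < Rabs (IZR n)) by (apply Rabs_pos_lt; auto).
set (h := PI / Rabs (IZR n)).
assert (Hh : 0 < h) by (apply Rdiv_lt_0_compat; auto).
assert (HcD : cts (fun t => D2 g t h)).
{ unfold D2. apply cts_plus. apply cts_minus. apply cts_shift; auto. apply cts_scal; auto.
  apply (cts_ext (fun t => g (t + - h))). intros; unfold Rminus; auto. apply cts_shift; auto. }
pose proof (cf_bound _ n (K * h ^ 2) HcD (fun t _ => HD t h Hh)) as Hb.
rewrite cf_D2 in Hb; auto.
replace (eit (IZR n * h) - RtoC 2 + eit (IZR n * - h))%C with (RtoC (-4)) in Hb.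
2:{ replace (IZR n * - h) with (- (IZR n * h)) by ring. unfold h.
    destruct (nh_PI n Hn) as [E|E]; rewrite E; [|rewrite Ropp_involutive]; rewrite eit_PI, eit_mPI; apply Ceq; simpl; ring. }
rewrite Cmod_mult, Cmod_R in Hb. rewrite Rabs_left in Hb by lra.
unfold h in Hb. rewrite <- (pow2_abs (IZR n)).
assert (E : K * (PI / Rabs (IZR n)) ^ 2 = 4 * (K * PI ^ 2 / (4 * Rabs (IZR n) ^ 2))) by (field; lra).
rewrite E in Hb. lra.
Qed.

Definition phiD (S c : R) (n : Z) : R := if Z.eq_dec n 0 then S else c / IZR n ^ 2.

Lemma sumL_WS (f : Z -> R) K : sumL f (W (Datatypes.S K)) = f (Z.of_nat (Datatypes.S K)) + (f (- Z.of_nat (Datatypes.S K))%Z + sumL f (W K)).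
Proof. reflexivity. Qed.
Lemma phiD_nz S c k : k <> 0%Z -> phiD S c k = c / IZR k ^ 2.
Proof. intros H; unfold phiD; destruct (Z.eq_dec k 0); tauto. Qed.

Lemma phiD_win S c M : 0 <= c -> sumL (phiD S c) (W (Datatypes.S M)) <= S + 2 * c * (2 - 1 / (INR M + 1)).
Proof.
intros Hc. induction M.
- simpl. unfold phiD. simpl. destruct (Z.eq_dec 1 0); [lia|]. destruct (Z.eq_dec (-1) 0); [lia|].
  destruct (Z.eq_dec 0 0); [|lia]. simpl. lra.
- rewrite sumL_WS. 
  rewrite (phiD_nz S c (Z.of_nat (Datatypes.S (Datatypes.S M)))) by lia.
  rewrite (phiD_nz S c (- Z.of_nat (Datatypes.S (Datatypes.S M)))) by lia.
  rewrite opp_IZR, <- INR_IZR_INZ. rewrite !S_INR in *.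
  pose proof (pos_INR M) as HM.
  assert (Hk : c / (INR M + 1 + 1) ^ 2 + c / (- (INR M + 1 + 1)) ^ 2 <= 2 * c * (1 / (INR M + 1) - 1 / (INR M + 1 + 1))).
  { replace (c / (- (INR M + 1 + 1)) ^ 2) with (c / (INR M + 1 + 1) ^ 2) by (field; lra).
    replace (2 * c * (1 / (INR M + 1) - 1 / (INR M + 1 + 1))) with (2 * c / ((INR M + 1) * (INR M + 1 + 1))) by (field; lra).
    apply Rle_trans with (2 * c / (INR M + 1 + 1) ^ 2). right; field; lra.
    unfold Rdiv. apply Rmult_le_compat_l; [lra|]. apply Rinv_le_contravar. nra. nra. }
  lra.
Qed.

Theorem Abound_D2 g S K : cts g -> per g -> 0 <= K -> (forall t, Cmod (g t) <= S) ->
  (forall t h, 0 < h -> Cmod (D2 g t h) <= K * h ^ 2) ->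
  Abound g (S + K * PI ^ 2).
Proof.
intros Hc Hp HK HS HD L HL.
assert (HS0 : 0 <= S) by (pose proof (HS 0); pose proof (Cmod_ge_0 (g 0)); lra).
set (c := K * PI ^ 2 / 4).
assert (Hc0 : 0 <= c) by (unfold c; pose proof PI_RGT_0; apply Rmult_le_pos; [nra|lra]).
apply Rle_trans with (sumL (phiD S c) L).
{ apply sumL_le. intros n _. unfold phiD. destruct (Z.eq_dec n 0).
  - apply cf_bound; auto.
  - eapply Rle_trans. apply (coef_bound g K n Hc Hp HK HD n0). unfold c. right; field.
    apply not_0_IZR; auto. }
destruct (exists_W L) as [M HM].
eapply Rle_trans. apply (sumL_incl _ L (W (Datatypes.S M)) HL).
{ intros x Hx. apply (W_mono M); auto. }
{ intros n. unfold phiD. destruct (Z.eq_dec n 0); auto. apply Rmult_le_pos; auto.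
  left; apply Rinv_0_lt_compat. rewrite <- Rsqr_pow2. apply Rsqr_pos_lt. apply not_0_IZR; auto. }
eapply Rle_trans. apply phiD_win; auto.
pose proof (pos_INR M). assert (0 < 1 / (INR M + 1)) by (apply Rdiv_lt_0_compat; lra).
assert (2 * c * (2 - 1 / (INR M + 1)) <= 4 * c) by nra.
assert (4 * c = K * PI ^ 2) by (unfold c; field). lra.
Qed.

Lemma abs_sin_le x : Rabs (sin x) <= Rabs x.
Proof.
assert (H : forall y, 0 <= y -> Rabs (sin y) <= y).
{ intros y Hy. destruct (Req_dec y 0) as [->|Hne]. rewrite sin_0, Rabs_R0; lra.
  pose proof (sin_lt_x y ltac:(lra)). apply Rabs_le. split; [|lra].
  destruct (Rle_lt_dec 1 y). pose proof (SIN_bound y); lra.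
  pose proof PI2_3_2. assert (0 <= sin y) by (apply sin_ge_0; lra). lra. }
destruct (Rle_lt_dec 0 x). rewrite (Rabs_right x) by lra. apply H; auto.
rewrite (Rabs_left x) by lra. rewrite <- (Ropp_involutive x) at 1. rewrite sin_neg, Rabs_Ropp. apply H; lra.
Qed.

Lemma one_minus_cos x : 2 - 2 * cos x <= x ^ 2.
Proof.
replace x with (2 * (x / 2)) at 1 by field. rewrite cos_2a_sin.
pose proof (Rsqr_le_abs_1 _ _ (abs_sin_le (x / 2))). unfold Rsqr in H. nra.
Qed.

Lemma Cmod_eit_1 u : Cmod (eit u - 1) <= Rabs u.
Proof.
unfold Cmod, eit. simpl. rewrite <- sqrt_Rsqr_abs. apply sqrt_le_1_alt.
pose proof (one_minus_cos u). pose proof (sin2_cos2 u). unfold Rsqr in *. nra.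
Qed.

Lemma ej_lip j s t : Cmod (ej j s - ej j t) <= Rabs (IZR j) * Rabs (s - t).
Proof.
unfold ej. replace (eit (IZR j * s) - eit (IZR j * t))%C with (eit (IZR j * t) * (eit (IZR j * (s - t)) - 1))%C.
rewrite Cmod_mult, Cmod_eit, Rmult_1_l, <- Rabs_mult. apply Cmod_eit_1.
replace (IZR j * s) with (IZR j * t + IZR j * (s - t)) by ring. rewrite eit_add. ring.
Qed.

Lemma ej_D2 j t h : Cmod (D2 (ej j) t h) <= IZR j ^ 2 * h ^ 2.
Proof.
unfold D2, ej.
replace (eit (IZR j * (t + h)) - RtoC 2 * eit (IZR j * t) + eit (IZR j * (t - h)))%C
  with (eit (IZR j * t) * RtoC (2 * cos (IZR j * h) - 2))%C.
- rewrite Cmod_mult, Cmod_eit, Rmult_1_l, Cmod_R. pose proof (one_minus_cos (IZR j * h)).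
  pose proof (COS_bound (IZR j * h)). rewrite Rabs_left1 by lra. rewrite Rpow_mult_distr in H. lra.
- replace (IZR j * (t + h)) with (IZR j * t + IZR j * h) by ring.
  replace (IZR j * (t - h)) with (IZR j * t + - (IZR j * h)) by ring.
  rewrite !eit_add. unfold eit. rewrite cos_neg, sin_neg. apply Ceq; simpl; ring.
Qed.

Definition L1T (T : TL) := sumL (fun p => Cmod (fst p) * Rabs (IZR (snd p))) T.
Definition L2T (T : TL) := sumL (fun p => Cmod (fst p) * IZR (snd p) ^ 2) T.

Lemma evT_lip T s t : Cmod (evT T s - evT T t) <= L1T T * Rabs (s - t).
Proof.
unfold evT, L1T. replace (sumC (fun p => fst p * ej (snd p) s) T - sumC (fun p => fst p * ej (snd p) t) T)%C
  with (sumC (fun p => fst p * (ej (snd p) s - ej (snd p) t)) T)%C.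
- eapply Rle_trans; [apply Cmod_sumC|]. rewrite Rmult_comm, <- sumL_scal.
  apply sumL_le. intros p _. rewrite Cmod_mult. rewrite <- Rmult_assoc. rewrite (Rmult_comm (Rabs (s - t))).
  rewrite Rmult_assoc. apply Rmult_le_compat_l. apply Cmod_ge_0. rewrite Rmult_comm. apply ej_lip.
- induction T; simpl. apply Ceq; simpl; ring. rewrite IHT. ring.
Qed.

Lemma evT_D2 T t h : Cmod (D2 (evT T) t h) <= L2T T * h ^ 2.
Proof.
unfold L2T. replace (D2 (evT T) t h) with (sumC (fun p => fst p * D2 (ej (snd p)) t h) T)%C.
- eapply Rle_trans; [apply Cmod_sumC|]. rewrite Rmult_comm, <- sumL_scal.
  apply sumL_le. intros p _. rewrite Cmod_mult. pose proof (ej_D2 (snd p) t h).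
  pose proof (Cmod_ge_0 (fst p)). nra.
- unfold D2, evT. induction T; simpl. apply Ceq; simpl; ring. rewrite IHT. unfold D2. ring.
Qed.

Lemma Cmod_eq0_of (z : C) : z = 0%C -> Cmod z = 0.
Proof. intros ->. apply Cmod_0. Qed.

Lemma le_r_mult X r : 1 <= r -> 0 <= X -> X <= r * X.
Proof. intros; nra. Qed.

Lemma pow_diff (a b : C) r m : 1 <= r -> Cmod a <= r -> Cmod b <= r ->
  Cmod (a ^ m - b ^ m) <= INR m * r ^ m * Cmod (a - b).
Proof.
intros Hr Ha Hb. induction m.
- simpl. unfold Cminus. rewrite Cplus_opp_r, Cmod_0; lra.
- replace (a ^ S m - b ^ S m)%C with (a * (a ^ m - b ^ m) + (a - b) * b ^ m)%C by (simpl; ring).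
  eapply Rle_trans; [apply Cmod_triangle|]. rewrite !Cmod_mult, Cmod_pow.
  pose proof (Cmod_ge_0 a); pose proof (Cmod_ge_0 b); pose proof (Cmod_ge_0 (a - b)); pose proof (Cmod_ge_0 (a ^ m - b ^ m)).
  assert (Hrm : 1 <= r ^ m) by (apply pow_R1_Rle; auto).
  assert (Hbm : Cmod b ^ m <= r ^ m) by (apply pow_le_compat; auto).
  rewrite S_INR. simpl pow. pose proof (pos_INR m).
  assert (Cmod a * Cmod (a ^ m - b ^ m) <= r * (INR m * r ^ m * Cmod (a - b))) by (apply Rmult_le_compat; auto).
  assert (Cmod (a - b) * Cmod b ^ m <= Cmod (a - b) * (r * r ^ m)) by (apply Rmult_le_compat_l; nra).
  nra.
Qed.

Lemma pow_D2 (a b c : C) r e1 e2 m : 1 <= r -> Cmod a <= r -> Cmod b <= r -> Cmod c <= r ->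
  Cmod (a - b) <= e1 -> Cmod (c - b) <= e1 -> Cmod (a - RtoC 2 * b + c) <= e2 ->
  Cmod (a ^ m - RtoC 2 * b ^ m + c ^ m) <= INR m * INR m * r ^ m * (e2 + e1 ^ 2).
Proof.
intros Hr Ha Hb Hc H1 H2 H3.
pose proof (Cmod_ge_0 (a - b)) as Hx. pose proof (Cmod_ge_0 (a - RtoC 2 * b + c)) as Hy.
assert (He1 : 0 <= e1) by lra. assert (He2 : 0 <= e2) by lra.
induction m.
- simpl. rewrite Cmod_eq0_of; [lra|apply Ceq; simpl; ring].
- replace (a ^ S m - RtoC 2 * b ^ S m + c ^ S m)%C with
    (b * (a ^ m - RtoC 2 * b ^ m + c ^ m) + (a - b) * (a ^ m - b ^ m) + (c - b) * (c ^ m - b ^ m) + (a - RtoC 2 * b + c) * b ^ m)%C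
    by (simpl; ring).
  assert (Hrm : 1 <= r ^ m) by (apply pow_R1_Rle; auto).
  pose proof (pow_diff a b r m Hr Ha Hb) as Pa. pose proof (pow_diff c b r m Hr Hc Hb) as Pc.
  assert (Hbm : Cmod b ^ m <= r ^ m) by (apply pow_le_compat; split; [apply Cmod_ge_0|auto]).
  pose proof (pos_INR m) as Hm.
  set (E := e2 + e1 ^ 2).
  assert (T1 : Cmod (b * (a ^ m - RtoC 2 * b ^ m + c ^ m)) <= INR m * INR m * r ^ S m * E).
  { rewrite Cmod_mult. simpl pow. replace (INR m * INR m * (r * r ^ m) * E) with (r * (INR m * INR m * r ^ m * E)) by ring.
    apply Rmult_le_compat; auto; apply Cmod_ge_0. }
  assert (T2 : Cmod ((a - b) * (a ^ m - b ^ m)) <= INR m * r ^ S m * E).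
  { rewrite Cmod_mult. eapply Rle_trans. apply Rmult_le_compat. apply Cmod_ge_0. apply Cmod_ge_0. exact H1. exact Pa.
    simpl pow. unfold E. assert (e1 * (INR m * r ^ m * e1) <= INR m * (r * r ^ m) * e1 ^ 2).
    { replace (e1 * (INR m * r ^ m * e1)) with (INR m * r ^ m * e1 ^ 2) by ring.
      replace (INR m * (r * r ^ m) * e1 ^ 2) with (r * (INR m * r ^ m * e1 ^ 2)) by ring.
      apply le_r_mult; auto. repeat apply Rmult_le_pos; try apply pow_le; lra. }
    assert (0 <= INR m * (r * r ^ m) * e2) by (repeat apply Rmult_le_pos; lra).
    assert (e1 * (INR m * r ^ m * Cmod (a - b)) <= e1 * (INR m * r ^ m * e1)).
    { apply Rmult_le_compat_l; auto. apply Rmult_le_compat_l; [nra|auto]. }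
    nra. }
  assert (T3 : Cmod ((c - b) * (c ^ m - b ^ m)) <= INR m * r ^ S m * E).
  { rewrite Cmod_mult. pose proof (Cmod_ge_0 (c - b)). eapply Rle_trans. apply Rmult_le_compat. apply Cmod_ge_0. apply Cmod_ge_0. exact H2. exact Pc.
    simpl pow. unfold E. assert (e1 * (INR m * r ^ m * e1) <= INR m * (r * r ^ m) * e1 ^ 2).
    { replace (e1 * (INR m * r ^ m * e1)) with (INR m * r ^ m * e1 ^ 2) by ring.
      replace (INR m * (r * r ^ m) * e1 ^ 2) with (r * (INR m * r ^ m * e1 ^ 2)) by ring.
      apply le_r_mult; auto. repeat apply Rmult_le_pos; try apply pow_le; lra. }
    assert (0 <= INR m * (r * r ^ m) * e2) by (repeat apply Rmult_le_pos; lra).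
    assert (e1 * (INR m * r ^ m * Cmod (c - b)) <= e1 * (INR m * r ^ m * e1)).
    { apply Rmult_le_compat_l; auto. apply Rmult_le_compat_l; [nra|auto]. }
    nra. }
  assert (T4 : Cmod ((a - RtoC 2 * b + c) * b ^ m) <= r ^ S m * E).
  { rewrite Cmod_mult, Cmod_pow. simpl pow. unfold E.
    assert (Cmod (a - RtoC 2 * b + c) * Cmod b ^ m <= e2 * r ^ m) by (apply Rmult_le_compat; auto; apply pow_le, Cmod_ge_0).
    assert (0 <= r * r ^ m * e1 ^ 2) by (repeat apply Rmult_le_pos; try apply pow_le; lra).
    assert (e2 * r ^ m <= r * r ^ m * e2).
    { replace (e2 * r ^ m) with (r ^ m * e2) by ring. rewrite Rmult_assoc. apply le_r_mult; auto.
      apply Rmult_le_pos; try apply pow_le; lra. }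
    lra. }
  eapply Rle_trans. apply Cmod_triangle. eapply Rle_trans. apply Rplus_le_compat_r. apply Cmod_triangle.
  eapply Rle_trans. apply Rplus_le_compat_r. apply Rplus_le_compat_r. apply Cmod_triangle.
  rewrite S_INR. fold E.
  assert (EE : (INR m + 1) * (INR m + 1) * r ^ S m * E = INR m * INR m * r ^ S m * E + INR m * r ^ S m * E + INR m * r ^ S m * E + r ^ S m * E) by ring.
  rewrite EE. lra.
Qed.

Lemma Cinv_le (z : C) mu r : 0 < mu -> mu <= Cmod z -> / mu <= r -> Cmod (Cinv z) <= r.
Proof.
intros Hmu Hz Hr. assert (z <> 0%C).
{ intro E. rewrite E, Cmod_0 in Hz. lra. }
rewrite Cmod_inv by auto. eapply Rle_trans; [|exact Hr]. apply Rinv_le_contravar; auto.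
Qed.

Lemma nz_of_mu (z : C) mu : 0 < mu -> mu <= Cmod z -> z <> 0%C.
Proof. intros Hmu Hz E. rewrite E, Cmod_0 in Hz. lra. Qed.

Definition CQ (T : TL) (r : R) := r ^ 3 * (nT T * L2T T + 2 * L1T T ^ 2) + r ^ 4 * L1T T ^ 2.

Theorem Q_pow_bound T mu r : 0 < mu -> (forall t, mu <= Cmod (evT T t)) -> 1 <= r -> / mu <= r ->
  forall m, Abound (fun t => (Cinv (evT T t)) ^ m)%C (r ^ m + INR m * INR m * r ^ m * CQ T r * PI ^ 2).
Proof.
intros Hmu HP Hr Hmr m.
set (P := evT T). set (Q := fun t => Cinv (P t)).
assert (HPn : forall t, P t <> 0%C) by (intros t; apply (nz_of_mu _ mu); auto).
assert (HQ : forall t, Cmod (Q t) <= r) by (intros t; apply (Cinv_le _ mu); auto).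
assert (HL1 : 0 <= L1T T) by (apply sumL_nonneg; intros; apply Rmult_le_pos; [apply Cmod_ge_0|apply Rabs_pos]).
assert (HL2 : 0 <= L2T T) by (apply sumL_nonneg; intros; apply Rmult_le_pos; [apply Cmod_ge_0|apply pow2_ge_0]).
assert (HMp : 0 <= nT T) by (apply sumL_nonneg; intros; apply Cmod_ge_0).
assert (HCQ : 0 <= CQ T r).
{ unfold CQ. apply Rplus_le_le_0_compat; apply Rmult_le_pos; try apply pow_le; try lra; try nra. }
apply Abound_D2.
- intros t. apply cC_pow. apply cC_inv; auto. apply cts_evT.
- intros t. unfold P. rewrite per_evT. auto.
- pose proof (pos_INR m). repeat apply Rmult_le_pos; try apply pow_le; lra.
- intros t. rewrite Cmod_pow. apply pow_le_compat. split; [apply Cmod_ge_0|apply HQ].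
- intros t h Hh. unfold D2.
  set (a := Q (t + h)). set (b := Q t). set (c := Q (t - h)).
  assert (Hab : Cmod (a - b) <= r ^ 2 * L1T T * h).
  { unfold a, b, Q. replace (Cinv (P (Rplus t h)) - Cinv (P t))%C with ((P t - P (Rplus t h)) * Cinv (P (Rplus t h)) * Cinv (P t))%C
      by (field; split; auto).
    rewrite !Cmod_mult. pose proof (evT_lip T t (t + h)). fold P in H.
    replace (Rabs (t - (t + h))) with h in H by (rewrite Rabs_minus_sym; replace (t + h - t) with h by ring; rewrite Rabs_right; lra).
    pose proof (HQ (t + h)); pose proof (HQ t). unfold Q in *.
    pose proof (Cmod_ge_0 (P t - P (Rplus t h))). pose proof (Cmod_ge_0 (Cinv (P (Rplus t h)))). pose proof (Cmod_ge_0 (Cinv (P t))).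
    simpl pow. replace (r * (r * 1) * L1T T * h) with (L1T T * h * r * r) by ring.
    repeat apply Rmult_le_compat; auto; try nra. }
  assert (Hcb : Cmod (c - b) <= r ^ 2 * L1T T * h).
  { unfold c, b, Q. replace (Cinv (P (Rminus t h)) - Cinv (P t))%C with ((P t - P (Rminus t h)) * Cinv (P (Rminus t h)) * Cinv (P t))%C
      by (field; split; auto).
    rewrite !Cmod_mult. pose proof (evT_lip T t (t - h)). fold P in H.
    replace (Rabs (t - (t - h))) with h in H by (replace (t - (t - h)) with h by ring; rewrite Rabs_right; lra).
    pose proof (HQ (t - h)); pose proof (HQ t). unfold Q in *.
    pose proof (Cmod_ge_0 (P t - P (Rminus t h))). pose proof (Cmod_ge_0 (Cinv (P (Rminus t h)))). pose proof (Cmod_ge_0 (Cinv (P t))).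
    simpl pow. replace (r * (r * 1) * L1T T * h) with (L1T T * h * r * r) by ring.
    repeat apply Rmult_le_compat; auto; try nra. }
  assert (Habc : Cmod (a - RtoC 2 * b + c) <= r ^ 3 * (nT T * L2T T + 2 * L1T T ^ 2) * h ^ 2).
  { set (p := P (Rplus t h)). set (q := P t). set (s := P (Rminus t h)).
    assert (E : (a - RtoC 2 * b + c = - (q * (p - RtoC 2 * q + s) + RtoC 2 * (p - q) * (s - q)) * Cinv p * Cinv q * Cinv s)%C).
    { unfold a, b, c, Q. fold p q s. field. repeat split; unfold p, q, s; auto. }
    rewrite E. rewrite !Cmod_mult, Cmod_opp.
    assert (Hn : Cmod (q * (p - RtoC 2 * q + s) + RtoC 2 * (p - q) * (s - q)) <= (nT T * L2T T + 2 * L1T T ^ 2) * h ^ 2).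
    { eapply Rle_trans; [apply Cmod_triangle|]. rewrite !Cmod_mult, Cmod_R, Rabs_right by lra.
      pose proof (evT_bound T t) as Bq. fold P q in Bq.
      pose proof (evT_D2 T t h) as Bd. unfold D2 in Bd. fold P p q s in Bd.
      pose proof (evT_lip T (t + h) t) as Bp. fold P p q in Bp.
      replace (Rabs (t + h - t)) with h in Bp by (replace (t + h - t) with h by ring; rewrite Rabs_right; lra).
      pose proof (evT_lip T (t - h) t) as Bs. fold P s q in Bs.
      replace (Rabs (t - h - t)) with h in Bs by (replace (t - h - t) with (- h) by ring; rewrite Rabs_Ropp, Rabs_right; lra).
      pose proof (Cmod_ge_0 q). pose proof (Cmod_ge_0 (p - RtoC 2 * q + s)). pose proof (Cmod_ge_0 (p - q)). pose proof (Cmod_ge_0 (s - q)).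
      assert (Cmod q * Cmod (p - RtoC 2 * q + s) <= nT T * (L2T T * h ^ 2)) by (apply Rmult_le_compat; auto).
      assert (Cmod (p - q) * Cmod (s - q) <= (L1T T * h) * (L1T T * h)) by (apply Rmult_le_compat; auto).
      nra. }
    assert (Hp1 : Cmod (Cinv p) <= r) by exact (HQ (t + h)).
    assert (Hq1 : Cmod (Cinv q) <= r) by exact (HQ t).
    assert (Hs1 : Cmod (Cinv s) <= r) by exact (HQ (t - h)).
    pose proof (Cmod_ge_0 (Cinv p)); pose proof (Cmod_ge_0 (Cinv q)); pose proof (Cmod_ge_0 (Cinv s)).
    pose proof (Cmod_ge_0 (q * (p - RtoC 2 * q + s) + RtoC 2 * (p - q) * (s - q))).
    replace (r ^ 3 * (nT T * L2T T + 2 * L1T T ^ 2) * h ^ 2) with ((nT T * L2T T + 2 * L1T T ^ 2) * h ^ 2 * r * r * r) by ring.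
    repeat apply Rmult_le_compat; auto; repeat apply Rmult_le_pos; auto. }
  pose proof (pow_D2 a b c r (r ^ 2 * L1T T * h) (r ^ 3 * (nT T * L2T T + 2 * L1T T ^ 2) * h ^ 2) m Hr (HQ _) (HQ _) (HQ _) Hab Hcb Habc) as HH.
  eapply Rle_trans; [exact HH|]. right. unfold CQ. ring.
Qed.

Lemma Abound_opp f M : cts f -> Abound f M -> Abound (fun t => - f t)%C M.
Proof.
intros Hc HA L HL. rewrite (sumL_ext _ (fun n => Cmod (cf f n))). apply HA; auto.
intros n. rewrite cf_opp by auto. apply Cmod_opp.
Qed.

Lemma cts_pow f k : cts f -> cts (fun t => f t ^ k)%C.
Proof. intros H t. apply cC_pow, H. Qed.
Lemma per_pow f k : per f -> per (fun t => f t ^ k)%C.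
Proof. intros H t. rewrite H. auto. Qed.

Lemma Abound_ext f g M : (forall t, f t = g t) -> Abound f M -> Abound g M.
Proof. intros E HA L HL. rewrite (sumL_ext _ (fun n => Cmod (cf f n))). apply HA; auto.
intros n. rewrite (cf_ext f g); auto. Qed.

Lemma sumL_ind0_out L : ~ In 0%Z L -> sumL (fun n => Cmod (if Z.eq_dec 0 n then 1%C else 0%C)) L = 0.
Proof.
induction L as [|a L IH]; intros H; [reflexivity|]. cbn [sumL]. destruct (Z.eq_dec 0 a). subst; simpl in H; tauto.
rewrite IH by (simpl in H; tauto). rewrite Cmod_0; ring.
Qed.
Lemma sumL_ind0 L : NoDup L -> sumL (fun n => Cmod (if Z.eq_dec 0 n then 1%C else 0%C)) L <= 1.
Proof.
induction 1; cbn [sumL]. lra. destruct (Z.eq_dec 0 x).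
- subst. rewrite sumL_ind0_out by auto. rewrite Cmod_1; lra.
- rewrite Cmod_0. lra.
Qed.

Lemma Abound_one : Abound (fun _ => 1%C) 1.
Proof. intros L HL. rewrite (sumL_ext _ (fun n => Cmod (if Z.eq_dec 0 n then 1%C else 0%C))).
apply sumL_ind0; auto. intros n; rewrite cf_one; auto. Qed.

Lemma Abound_pow f M k : cts f -> per f -> Abound f M -> Abound (fun t => f t ^ k)%C (M ^ k).
Proof.
intros Hc Hp HA. induction k.
- simpl. apply Abound_one.
- simpl. apply (Abound_mul f (fun t => f t ^ k)%C M (M ^ k)); auto. apply cts_pow; auto.
Qed.

Lemma Cpow_mult (a b : C) k : ((a * b) ^ k = a ^ k * b ^ k)%C.
Proof. induction k; simpl. apply Ceq; simpl; ring. rewrite IHk. ring. Qed.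

Lemma geom_half K : sumL (fun k => (1/2) ^ k) (seq 0 K) = 2 - 2 * (1/2) ^ K.
Proof.
induction K. simpl; ring. rewrite seq_S, sumL_app, IHK. cbn [sumL]. rewrite Nat.add_0_l. rewrite <- tech_pow_Rmult. set (X := (1/2)^K). lra.
Qed.

Lemma sq_le_pow2 k : (INR k + 1) ^ 2 <= 4 * 2 ^ k.
Proof.
assert (Aux : forall k, 2 * INR k + 3 <= 4 * 2 ^ k).
{ induction k0. simpl; lra. rewrite S_INR. pose proof (pos_INR k0). simpl. lra. }
induction k. simpl; lra. rewrite S_INR. specialize (Aux k). simpl in *. nra.
Qed.

Lemma geom_sum_C (D Q : C) K :
  (sumC (fun k => D ^ k * Q ^ (S k)) (seq 0 K) * (1 - D * Q) = Q * (1 - (D * Q) ^ K))%C.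
Proof.
induction K. simpl. apply Ceq; simpl; ring.
rewrite seq_S, sumC_app. cbn [sumC]. rewrite Nat.add_0_l.
replace ((sumC (fun k : nat => D ^ k * Q ^ S k) (seq 0 K) + (D ^ K * Q ^ S K + 0)) * (1 - D * Q))%C
  with (sumC (fun k : nat => D ^ k * Q ^ S k) (seq 0 K) * (1 - D * Q) + D ^ K * Q ^ S K * (1 - D * Q))%C by ring.
rewrite IHK. rewrite !Cpow_mult. simpl. ring.
Qed.

Lemma Cmod_minus_sym (a b : C) : Cmod (a - b) = Cmod (b - a).
Proof. replace (a - b)%C with (- (b - a))%C by ring. apply Cmod_opp. Qed.

Theorem wiener F M mu : cts F -> per F -> Abound F M -> 0 < mu -> (forall t, mu <= Cmod (F t)) ->
  exists B, Abound (fun t => Cinv (F t)) B.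
Proof.
intros Hc Hp HA Hmu HF.
set (r := Rmax 1 (2 / mu)).
assert (Hr1 : 1 <= r) by apply Rmax_l. assert (Hr2 : 2 / mu <= r) by apply Rmax_r.
set (d := / (4 * r)).
assert (Hd : 0 < d) by (unfold d; apply Rinv_0_lt_compat; lra).
assert (Hdr : d * r = 1/4) by (unfold d; field; lra).
assert (Hdmu : d <= mu / 8).
{ unfold d. apply Rle_trans with (/ (4 * (2 / mu))). apply Rinv_le_contravar. apply Rmult_lt_0_compat. lra.
  apply Rdiv_lt_0_compat; lra. lra. right; field; lra. }
destruct (Abound_tail F M Hc HA d Hd) as [N1 H1].
destruct (repr F M Hc Hp HA d Hd) as [N2 H2].
set (N := Nat.max N1 N2). set (T := SN F N). set (P := evT T).
assert (HE : Abound (fun t => F t - P t)%C d) by (apply H1; unfold N; lia).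
assert (Hsup : forall t, Cmod (F t - P t) <= d) by (intros t; apply H2; unfold N; lia).
assert (HPmu : forall t, mu / 2 <= Cmod (P t)).
{ intros t. pose proof (HF t). pose proof (Hsup t).
  replace (F t) with (P t + (F t - P t))%C in H by ring. pose proof (Cmod_triangle (P t) (F t - P t)). lra. }
assert (HPn : forall t, P t <> 0%C) by (intros t; apply (nz_of_mu _ (mu/2)); auto; lra).
assert (HcP : cts P) by apply cts_evT. assert (HpP : per P) by apply per_evT.
set (D := fun t => (P t - F t)%C).
assert (HcD : cts D) by (apply cts_minus; auto). assert (HpD : per D) by (apply per_minus; auto).
assert (HAD : Abound D d).
{ apply (Abound_ext (fun t => - (F t - P t))%C). intros t; unfold D; ring.
  apply Abound_opp; auto. apply cts_minus; auto. }
assert (HDd : forall t, Cmod (D t) <= d) by (intros t; unfold D; rewrite Cmod_minus_sym; auto).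
set (Q := fun t => Cinv (P t)).
assert (HQr : forall t, Cmod (Q t) <= r).
{ intros t. apply (Cinv_le _ (mu/2)); auto. lra. replace (/ (mu / 2)) with (2 / mu) by (field; lra). auto. }
assert (HcQ : cts Q) by (intros t; apply cC_inv; auto).
set (h := fun k t => (D t ^ k * Q t ^ (S k))%C).
set (C' := CQ T r * PI ^ 2).
assert (HC' : 0 <= C').
{ unfold C', CQ. pose proof (sumL_nonneg (fun p : C * Z => Cmod (fst p) * Rabs (IZR (snd p))) T ltac:(intros; apply Rmult_le_pos; [apply Cmod_ge_0|apply Rabs_pos])).
  pose proof (sumL_nonneg (fun p : C * Z => Cmod (fst p) * IZR (snd p) ^ 2) T ltac:(intros; apply Rmult_le_pos; [apply Cmod_ge_0|apply pow2_ge_0])).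
  pose proof (sumL_nonneg (fun p : C * Z => Cmod (fst p)) T ltac:(intros; apply Cmod_ge_0)).
  fold (L1T T) (L2T T) (nT T) in *. apply Rmult_le_pos; [|apply pow2_ge_0].
  apply Rplus_le_le_0_compat; apply Rmult_le_pos; try apply pow_le; try lra; try nra. }
set (b := fun k => d ^ k * (r ^ S k + INR (S k) * INR (S k) * r ^ S k * CQ T r * PI ^ 2)).
assert (HAh : forall k, Abound (h k) (b k)).
{ intros k. unfold h, b. apply (Abound_mul (fun t => D t ^ k)%C (fun t => Q t ^ S k)%C).
  apply cts_pow; auto. apply per_pow; auto. apply Abound_pow; auto. apply cts_pow; auto.
  apply (Q_pow_bound T (mu/2) r); auto. lra. replace (/ (mu / 2)) with (2 / mu) by (field; lra). auto. }
set (Bc := r * (1 + 4 * C')).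
assert (Hb : forall k, b k <= Bc * (1/2) ^ k).
{ intros k. unfold b, Bc.
  replace (d ^ k * (r ^ S k + INR (S k) * INR (S k) * r ^ S k * CQ T r * PI ^ 2))
    with (r * (d * r) ^ k * (1 + INR (S k) ^ 2 * C')) by (unfold C'; rewrite Rpow_mult_distr; simpl; ring).
  rewrite Hdr. rewrite S_INR. pose proof (sq_le_pow2 k).
  assert (H2k : 1 <= 2 ^ k) by (apply pow_R1_Rle; lra).
  assert ((1/4) ^ k * 2 ^ k = (1/2) ^ k) by (rewrite <- Rpow_mult_distr; f_equal; field).
  assert (0 < (1/4) ^ k) by (apply pow_lt; lra).
  assert (1 + (INR k + 1) ^ 2 * C' <= 2 ^ k * (1 + 4 * C')) by nra.
  apply Rle_trans with (r * (1/4) ^ k * (2 ^ k * (1 + 4 * C'))).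
  apply Rmult_le_compat_l; [apply Rmult_le_pos; lra|auto].
  rewrite <- H0. right; ring. }
assert (HB : forall K, sumL b (seq 0 K) <= 2 * Bc).
{ intros K. apply Rle_trans with (sumL (fun k => Bc * (1/2) ^ k) (seq 0 K)). apply sumL_le; intros; auto.
  rewrite sumL_scal, geom_half. assert (0 <= Bc) by (unfold Bc; apply Rmult_le_pos; lra).
  assert (0 < (1/2) ^ K) by (apply pow_lt; lra). nra. }
exists (2 * Bc).
apply (Abound_series h (fun t => Cinv (F t)) b (2 * Bc)); auto.
- intros k. unfold h. apply cts_mult; apply cts_pow; auto.
- intros t. apply cC_inv; auto. intro E. pose proof (HF t). rewrite E, Cmod_0 in H. lra.
- intros eps He.
  destruct (pow_lt_1_zero (1/4) ltac:(rewrite Rabs_right; lra) (eps / (2 * r)) ltac:(apply Rdiv_lt_0_compat; lra)) as [K HK].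
  exists K. intros t _. specialize (HK K (Nat.le_refl _)). rewrite Rabs_right in HK by (apply Rle_ge, pow_le; lra).
  set (z := (D t * Q t)%C).
  assert (Hz : Cmod z <= 1/4).
  { unfold z. rewrite Cmod_mult. rewrite <- Hdr. apply Rmult_le_compat; auto; apply Cmod_ge_0. }
  assert (H1z : 3/4 <= Cmod (1 - z)).
  { pose proof (Cmod_triangle (1 - z) z). replace (1 - z + z)%C with (RtoC 1) in H by ring. rewrite Cmod_1 in H. lra. }
  assert (H1zn : (1 - z)%C <> 0%C) by (apply (nz_of_mu _ (3/4)); auto; lra).
  assert (EF : F t = (P t * (1 - z))%C).
  { unfold z, D, Q. field. auto. }
  pose proof (geom_sum_C (D t) (Q t) K) as G. fold z in G.
  assert (ES : sumC (fun k => h k t) (seq 0 K) = (Q t * (1 - z ^ K) * Cinv (1 - z))%C).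
  { unfold h. rewrite <- G. field. auto. }
  rewrite ES, EF.
  replace (Cinv (P t * (1 - z)) - Q t * (1 - z ^ K) * Cinv (1 - z))%C with (Q t * z ^ K * Cinv (1 - z))%C
    by (unfold Q; field; split; auto).
  rewrite !Cmod_mult, Cmod_pow. rewrite Cmod_inv by auto.
  assert (Cmod z ^ K <= (1/4) ^ K) by (apply pow_le_compat; split; [apply Cmod_ge_0|auto]).
  assert (/ Cmod (1 - z) <= 4/3).
  { replace (4/3) with (/ (3/4)) by field. apply Rinv_le_contravar; lra. }
  assert (0 <= Cmod z ^ K) by (apply pow_le, Cmod_ge_0).
  assert (0 <= / Cmod (1 - z)) by (left; apply Rinv_0_lt_compat; lra).
  apply Rle_trans with (r * (1/4) ^ K * (4/3)).
  apply Rmult_le_compat; [apply Rmult_le_pos; [apply Cmod_ge_0|auto] | auto | apply Rmult_le_compat; auto; apply Cmod_ge_0 | auto].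
  assert (r * (1/4) ^ K < eps / 2).
  { apply Rmult_lt_reg_l with (/ r). apply Rinv_0_lt_compat; lra.
    replace (/ r * (r * (1/4) ^ K)) with ((1/4) ^ K) by (field; lra).
    replace (/ r * (eps / 2)) with (eps / (2 * r)) by (field; lra). auto. }
  lra.
Qed.

Lemma sum_n_sumL (a : nat -> R) K : sum_n a K = sumL a (seq 0 (S K)).
Proof.
induction K. rewrite sum_O. simpl. ring.
rewrite sum_Sn, IHK. rewrite (seq_S (S K)), sumL_app. simpl. unfold plus; simpl. ring.
Qed.

Lemma ex_series_bounded (a : nat -> R) B : (forall n, 0 <= a n) -> (forall K, sum_n a K <= B) -> ex_series a.
Proof.
intros Hp HB. destruct (ex_finite_lim_seq_incr (sum_n a) B) as [l Hl]; auto.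
intros n. rewrite sum_Sn. unfold plus; simpl. pose proof (Hp (S n)). lra.
exists l. exact Hl.
Qed.

Lemma series_partial_le (a : nat -> R) l K : is_series a l -> (forall n, 0 <= a n) -> sum_n a K <= l.
Proof.
intros Hs Hp. apply (is_lim_seq_incr_compare (sum_n a) l). exact Hs.
intros n. rewrite sum_Sn. unfold plus; simpl. pose proof (Hp (S n)). lra.
Qed.

Lemma sumL_W_eq (phi : Z -> R) K : sumL phi (W K) =
  sum_n (fun k => phi (Z.of_nat k)) K + sum_n (fun k => phi (- Z.of_nat (S k))%Z) K - phi (- Z.of_nat (S K))%Z.
Proof.
induction K.
- rewrite !sum_O. simpl. ring.
- rewrite sumL_WS, IHK, !sum_Sn. unfold plus; simpl. ring.
Qed.

Lemma per_int g : per g -> forall (k : Z) s, g (s + IZR k * (2 * PI)) = g s.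
Proof.
intros Hp k. induction k using Z.peano_ind; intros s.
- rewrite Rmult_0_l, Rplus_0_r; auto.
- rewrite succ_IZR. replace (s + (IZR k + 1) * (2 * PI)) with ((s + IZR k * (2 * PI)) + 2 * PI) by ring.
  rewrite Hp. auto.
- rewrite <- Z.sub_1_r, minus_IZR. rewrite <- (Hp (s + (IZR k - 1) * (2 * PI))).
  replace (s + (IZR k - 1) * (2 * PI) + 2 * PI) with (s + IZR k * (2 * PI)) by ring. auto.
Qed.

Lemma per_reduce g : per g -> forall t, exists s, -PI <= s <= PI /\ g t = g s.
Proof.
intros Hp t. pose proof PI_RGT_0.
set (x := (t + PI) / (2 * PI)). destruct (archimed x) as [A1 A2].
set (n := (up x - 1)%Z). exists (t - IZR n * (2 * PI)).
assert (Hn : IZR n <= x < IZR n + 1) by (unfold n; rewrite minus_IZR; lra).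
assert (Ht : t + PI = x * (2 * PI)) by (unfold x; field; lra).
split. nra.
rewrite <- (per_int g Hp n (t - IZR n * (2 * PI))). f_equal; ring.
Qed.

Lemma Gamma_eit t : Gamma (eit t).
Proof. unfold Gamma. apply Cmod_eit. Qed.

Lemma cts_F f : continuous_on_Gamma f -> cts (fun t => f (eit t)).
Proof.
intros Hf t. unfold continuous.
apply (filterlim_comp _ _ _ eit f (locally t) (within Gamma (locally (eit t)))).
- intros P HP. unfold within in HP.
  pose proof (cC_eit (fun s => s) t (cR_id t) _ HP) as H. unfold filtermap in H.
  unfold filtermap. revert H. apply filter_imp. intros s Hs. apply Hs. apply Gamma_eit.
- apply Hf. apply Gamma_eit.
Qed.

Lemma per_F f : per (fun t => f (eit t)).
Proof. intros t. rewrite eit_per. auto. Qed.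

Lemma Abound_of_conv omega f : (forall n, 1 <= omega n) -> w_abs_conv omega f ->
  exists M, Abound (fun t => f (eit t)) M.
Proof.
intros Hw [[lp Hlp] [ln Hln]]. exists (lp + ln). intros L HL.
set (phi := fun n => Cmod (fourier_coeff f n) * omega n).
assert (Hphi : forall n, 0 <= phi n) by (intros n; unfold phi; pose proof (Hw n); pose proof (Cmod_ge_0 (fourier_coeff f n)); nra).
destruct (exists_W L) as [K HK].
eapply Rle_trans. apply (sumL_incl _ L (W K) HL HK). intros; apply Cmod_ge_0.
apply Rle_trans with (sumL phi (W K)).
{ apply sumL_le. intros n _. unfold phi. change (cf (fun t => f (eit t)) n) with (fourier_coeff f n).
  pose proof (Hw n); pose proof (Cmod_ge_0 (fourier_coeff f n)); nra. }
rewrite sumL_W_eq.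
pose proof (series_partial_le _ _ K Hlp (fun k => Hphi _)).
pose proof (series_partial_le _ _ K Hln (fun k => Hphi _)).
pose proof (Hphi (- Z.of_nat (S K))%Z). unfold phi in *. lra.
Qed.

Lemma F_min f : continuous_on_Gamma f -> (forall z, Gamma z -> f z <> 0%C) ->
  exists mu, 0 < mu /\ forall t, mu <= Cmod (f (eit t)).
Proof.
intros Hc Hnz. set (F := fun t => f (eit t)). pose proof PI_RGT_0.
pose proof (cts_F f Hc) as HcF. fold F in HcF.
set (g := fun t => fst (F t) ^ 2 + snd (F t) ^ 2).
assert (Hg : forall t, continuous g t).
{ intros t. unfold g. simpl. apply cR_plus; apply cR_mult; try apply cR_mult; try apply cR_const;
  first [apply cont_C_fst | apply cont_C_snd]; auto. }
destruct (continuity_ab_min g (-PI) PI ltac:(lra)) as [tm [Htm Htm']].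
{ intros c _. apply continuity_pt_filterlim. apply Hg. }
assert (Hg0 : 0 < g tm).
{ unfold g. assert (F tm <> 0%C) by (apply Hnz, Gamma_eit). destruct (F tm) as [a b]. simpl.
  assert (a <> 0 \/ b <> 0).
  { destruct (Req_dec a 0), (Req_dec b 0); auto. subst. exfalso. apply H0. reflexivity. }
  destruct H1; nra. }
exists (sqrt (g tm)). split. apply sqrt_lt_R0; auto.
intros t. destruct (per_reduce F (per_F f) t) as [s [Hs E]]. change (f (eit t)) with (F t). rewrite E.
unfold Cmod. apply sqrt_le_1_alt. apply (Htm s Hs).
Qed.

Lemma NoDup_map_inj {A B} (f : A -> B) (l : list A) : (forall x y, f x = f y -> x = y) -> NoDup l -> NoDup (map f l).
Proof.
intros Hi. induction 1; simpl; constructor; auto.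
intros Hin. apply in_map_iff in Hin. destruct Hin as [y [E Hy]]. apply Hi in E. subst; contradiction.
Qed.

Lemma conv_of_Abound (G : R -> C) B (nu : Z -> R) c0 : Abound G B -> (forall n, 0 <= nu n <= c0) ->
  Z_summable (fun n => Cmod (cf G n) * nu n).
Proof.
intros HA Hnu. split.
- apply (ex_series_bounded _ (c0 * B)).
  intros n. pose proof (Hnu (Z.of_nat n)). pose proof (Cmod_ge_0 (cf G (Z.of_nat n))). nra.
  intros K. rewrite sum_n_sumL.
  apply Rle_trans with (c0 * sumL (fun k => Cmod (cf G (Z.of_nat k))) (seq 0 (S K))).
  { rewrite <- sumL_scal. apply sumL_le. intros k _. pose proof (Hnu (Z.of_nat k)). pose proof (Cmod_ge_0 (cf G (Z.of_nat k))). nra. }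
  pose proof (HA (map Z.of_nat (seq 0 (S K)))) as H. rewrite sumL_map in H.
  assert (0 <= c0) by (pose proof (Hnu 0%Z); lra).
  apply Rmult_le_compat_l; auto. apply H. apply NoDup_map_inj. intros; lia. apply seq_NoDup.
- apply (ex_series_bounded _ (c0 * B)).
  intros n. pose proof (Hnu (- Z.of_nat (S n))%Z). pose proof (Cmod_ge_0 (cf G (- Z.of_nat (S n))%Z)). nra.
  intros K. rewrite sum_n_sumL.
  apply Rle_trans with (c0 * sumL (fun k => Cmod (cf G (- Z.of_nat (S k))%Z)) (seq 0 (S K))).
  { rewrite <- sumL_scal. apply sumL_le. intros k _. pose proof (Hnu (- Z.of_nat (S k))%Z). pose proof (Cmod_ge_0 (cf G (- Z.of_nat (S k))%Z)). nra. }
  pose proof (HA (map (fun k => (- Z.of_nat (S k))%Z) (seq 0 (S K)))) as H. rewrite sumL_map in H.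
  assert (0 <= c0) by (pose proof (Hnu 0%Z); lra).
  apply Rmult_le_compat_l; auto. apply H. apply NoDup_map_inj. intros; lia. apply seq_NoDup.
Qed.

Theorem mainTheorem1 (omega : Z -> R) (f : C -> C) :
  is_weight omega ->
  continuous_on_Gamma f ->
  w_abs_conv omega f ->
  (forall z, Gamma z -> f z <> 0%C) ->
  exists nu : Z -> R,
    is_weight nu /\
    w_abs_conv nu (fun z => Cinv (f z)) /\
    (nonconstant nu <-> nonconstant omega) /\
    (forall n, nu n <= omega n).
Proof.
intros [Hw1 Hw2] Hc Hconv Hnz.
destruct (Abound_of_conv omega f Hw1 Hconv) as [M HM].
destruct (F_min f Hc Hnz) as [mu [Hmu Hmin]].
destruct (wiener (fun t => f (eit t)) M mu (cts_F f Hc) (per_F f) HM Hmu Hmin) as [B HB].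
set (G := fun t => Cinv (f (eit t))).
assert (Hconv' : forall nu c0, (forall n, 0 <= nu n <= c0) -> w_abs_conv nu (fun z => Cinv (f z))).
{ intros nu c0 Hnu. unfold w_abs_conv. apply (conv_of_Abound G B nu c0 HB Hnu). }
destruct (classic (nonconstant omega)) as [[m [n Hmn]]|Hnc].
- set (c0 := Rmax (omega m) (omega n)).
  assert (Hc0 : 1 <= c0) by (pose proof (Hw1 m); pose proof (Rmax_l (omega m) (omega n)); unfold c0; lra).
  exists (fun k => Rmin (omega k) c0). split; [|split; [|split]].
  + split.
    * intros k. apply Rmin_glb; auto.
    * intros a b. pose proof (Hw1 a); pose proof (Hw1 b); pose proof (Hw2 a b). pose proof (Hw1 (a + b)%Z).
      unfold Rmin. destruct (Rle_dec (omega (a + b)%Z) c0), (Rle_dec (omega a) c0), (Rle_dec (omega b) c0); nra.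
  + apply (Hconv' _ c0). intros k. pose proof (Hw1 k). split. apply Rmin_glb; lra. apply Rmin_r.
  + split; intros _; [exists m, n; auto|].
    exists m, n. rewrite !Rmin_left; auto. apply Rmax_r. apply Rmax_l.
  + intros k. apply Rmin_l.
- assert (Hconst : forall k, omega k = omega 0%Z).
  { intros k. destruct (Req_dec (omega k) (omega 0%Z)); auto. exfalso. apply Hnc. exists k, 0%Z. auto. }
  exists omega. split; [split; auto|split; [|split]].
  + apply (Hconv' _ (omega 0%Z)). intros k. rewrite Hconst. pose proof (Hw1 0%Z). lra.
  + tauto.
  + intros; lra.
Qed.
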